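(* Consider the linearized ADM iteration described in the context and suppose that $\mu\geq\sqrt2\max\{\rho_1,\rho_2\}$. Then there exist positive values $\eta^0_U,\eta^0_Q,\eta^0_W,R$, depending only on the initialization, such that whenever $\eta_U>\eta^0_U$, $\eta_Q>\eta^0_Q$, $\eta_W>\eta^0_W$, the sequence $\{\Theta_k=(\Omega_k,U_k,Q_k,W_k,\varepsilon^{(1)}_k,\varepsilon^{(2)}_k,Z^{(1)}_k,Z^{(2)}_k)\}$ satisfies: (1) for $k=0,1,2,\dots$, $\|\Theta_k\|:=\max\{\|\Omega_k\|,\|U_k\|,\|Q_k\|,\|W_k\|,\|\varepsilon^{(1)}_k\|,\|\varepsilon^{(2)}_k\|,\|Z^{(1)}_k\|,\|Z^{(2)}_k\|\}<R$, so the iterates lie in a compact set; (2) every convergent subsequence of $\{\Theta_k\}$ converges to a point of $S$; (3) $\mathrm{dist}(\Theta_k,S)\to0$ as $k\to\infty$, where $\mathrm{dist}(\Theta,S)=\min_{\Theta'\in S}\|\Theta'-\Theta\|$. Here $$S=\Big\{\Theta=(\Omega,U,Q,W,\varepsilon^{(1)},\varepsilon^{(2)},Z^{(1)},Z^{(2)}) \;\Big|\; \|\Theta\|<R,\ -\nabla L_s(\Theta)\in\lambda_1\partial\|U\|_1,\ H=QU+\varepsilon^{(1)},\ Y=WQU+\varepsilon^{(2)}\Big\},$$ with $\|U\|_1$ regarded as a convex function of $\Theta$ constant in all components other than $U$ (so the inclusion means $-\nabla_U L_s(\Theta)\in\lambda_1\partial\|U\|_1$ and all other partial gradients of $L_s$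 vanish).
   Context: Data: $X\in\mathbb{R}^{m\times n}$, $H\in\mathbb{R}^{s\times n}$, $Y\in\mathbb{R}^{c\times n}$; parameters $\lambda_1,\lambda_2,\rho_1,\rho_2,\delta_1,\delta_2,\mu>0$ and step parameters $\eta_U,\eta_Q,\eta_W>0$. Variables: $\Omega\in\mathbb{R}^{r\times m}$, $U\in\mathbb{R}^{r\times n}$, $Q\in\mathbb{R}^{s\times r}$, $W\in\mathbb{R}^{c\times s}$, $\varepsilon^{(1)},Z^{(1)}\in\mathbb{R}^{s\times n}$, $\varepsilon^{(2)},Z^{(2)}\in\mathbb{R}^{c\times n}$. Matrix norms are Frobenius norms, $\langle A,B\rangle=\mathrm{tr}(A^TB)$, $\|U\|_1=\sum_{ij}|U_{ij}|$. The Lagrangian is $L(\Omega,U,Q,W,\varepsilon^{(1)},\varepsilon^{(2)},Z^{(1)},Z^{(2)})=\frac12\|U-\Omega X\|_F^2+\lambda_1\|U\|_1+\frac{\rho_1}{2}\|\varepsilon^{(1)}\|^2+\frac{\rho_2}{2}\|\varepsilon^{(2)}\|^2+\langle Z^{(1)},H-QU-\varepsilon^{(1)}\rangle+\langle Z^{(2)},Y-WQU-\varepsilon^{(2)}\rangle+\frac{\mu}{2}\|H-QU-\varepsilon^{(1)}\|^2+\frac{\mu}{2}\|Y-WQU-\varepsilon^{(2)}\|^2+\frac{\delta_1}{2}\|Q\|^2+\frac{\delta_2}{2}\|W\|^2+\frac{\lambda_2}{2}\|\Omega\|^2$, and $L_s=L-\lambda_1\|U\|_1$ is its smooth part. Let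 $\tau_t$ be entrywise soft thresholding, $\tau_t(x)=\mathrm{sign}(x)\max(|x|-t,0)$. Starting from an initialization $\Theta_0$, for $k=0,1,2,\dots$: $U_{k+1}=\tau_{\lambda_1/(\mu\eta_U)}\big(U_k-\frac{1}{\mu\eta_U}\nabla_U L_s(\Omega_k,U_k,Q_k,W_k,\varepsilon^{(1)}_k,\varepsilon^{(2)}_k,Z^{(1)}_k,Z^{(2)}_k)\big)$; $Q_{k+1}=Q_k-\frac{1}{\mu\eta_Q}\nabla_Q L(\Omega_k,U_{k+1},Q_k,W_k,\varepsilon^{(1)}_k,\varepsilon^{(2)}_k,Z^{(1)}_k,Z^{(2)}_k)$; $W_{k+1}=W_k-\frac{1}{\mu\eta_W}\nabla_W L(\Omega_k,U_{k+1},Q_{k+1},W_k,\varepsilon^{(1)}_k,\varepsilon^{(2)}_k,Z^{(1)}_k,Z^{(2)}_k)$; $\Omega_{k+1}=\arg\min_\Omega L(\Omega,U_{k+1},Q_{k+1},W_{k+1},\varepsilon^{(1)}_k,\varepsilon^{(2)}_k,Z^{(1)}_k,Z^{(2)}_k)$; $\varepsilon^{(1)}_{k+1}=\arg\min_{\varepsilon^{(1)}} L(\Omega_{k+1},U_{k+1},Q_{k+1},W_{k+1},\varepsilon^{(1)},\varepsilon^{(2)}_k,Z^{(1)}_k,Z^{(2)}_k)$; $\varepsilon^{(2)}_{k+1}=\arg\min_{\varepsilon^{(2)}} L(\Omega_{k+1},U_{k+1},Q_{k+1},W_{k+1},\varepsilon^{(1)}_{k+1},\varepsilon^{(2)},Z^{(1)}_k,Z^{(2)}_k)$;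 $Z^{(1)}_{k+1}=Z^{(1)}_k+\mu(H-Q_{k+1}U_{k+1}-\varepsilon^{(1)}_{k+1})$; $Z^{(2)}_{k+1}=Z^{(2)}_k+\mu(Y-W_{k+1}Q_{k+1}U_{k+1}-\varepsilon^{(2)}_{k+1})$. *)

(* Defs.v *)
From HB Require Import structures.
From mathcomp Require Import all_boot all_order all_algebra.
From mathcomp Require Import all_classical all_reals all_analysis.
Set Implicit Arguments. Unset Strict Implicit. Unset Printing Implicit Defensive.
Import Order.TTheory GRing.Theory Num.Theory.
Local Open Scope ring_scope.

Section ADM.
Variable R : realType.

Definition mxinner (a b : nat) (A B : 'M[R]_(a, b)) : R := \tr (A^T *m B).
Definition fnorm (a b : nat) (A : 'M[R]_(a, b)) : R :=
  Num.sqrt (\sum_(i < a) \sum_(j < b) (A i j) ^+ 2).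
Definition l1norm (a b : nat) (A : 'M[R]_(a, b)) : R :=
  \sum_(i < a) \sum_(j < b) `|A i j|.

Definition soft (t : R) (a b : nat) (A : 'M[R]_(a, b)) : 'M[R]_(a, b) :=
  map_mx (fun x => Num.sg x * Num.max (`|x| - t) 0) A.

Definition is_grad (a b : nat) (f : 'M[R]_(a, b) -> R) (X G : 'M[R]_(a, b)) : Prop :=
  forall D : 'M[R]_(a, b),
    is_derive (0 : R) (1 : R) (fun t : R => f (X + t *: D)) (mxinner G D).

Definition is_subgrad (a b : nat) (f : 'M[R]_(a, b) -> R) (X G : 'M[R]_(a, b)) : Prop :=
  forall V : 'M[R]_(a, b), f X + mxinner G (V - X) <= f V.

Definition is_argmin (a b : nat) (f : 'M[R]_(a, b) -> R) (X : 'M[R]_(a, b)) : Prop :=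
  forall V : 'M[R]_(a, b), f X <= f V.

Record adm_params := ADMParams {
  lam1 : R; lam2 : R; rho1 : R; rho2 : R; del1 : R; del2 : R; mu : R }.

Definition params_pos (P : adm_params) : Prop :=
  0 < lam1 P /\ 0 < lam2 P /\ 0 < rho1 P /\ 0 < rho2 P /\
  0 < del1 P /\ 0 < del2 P /\ 0 < mu P.

Section Dims.
Variables m n r s c : nat.

Record state := State {
  Om : 'M[R]_(r, m); Uv : 'M[R]_(r, n); Qv : 'M[R]_(s, r); Wv : 'M[R]_(c, s);
  E1 : 'M[R]_(s, n); E2 : 'M[R]_(c, n); Z1 : 'M[R]_(s, n); Z2 : 'M[R]_(c, n) }.

Definition with_Om (T : state) V := State V (Uv T) (Qv T) (Wv T) (E1 T) (E2 T) (Z1 T) (Z2 T).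
Definition with_U  (T : state) V := State (Om T) V (Qv T) (Wv T) (E1 T) (E2 T) (Z1 T) (Z2 T).
Definition with_Q  (T : state) V := State (Om T) (Uv T) V (Wv T) (E1 T) (E2 T) (Z1 T) (Z2 T).
Definition with_W  (T : state) V := State (Om T) (Uv T) (Qv T) V (E1 T) (E2 T) (Z1 T) (Z2 T).
Definition with_E1 (T : state) V := State (Om T) (Uv T) (Qv T) (Wv T) V (E2 T) (Z1 T) (Z2 T).
Definition with_E2 (T : state) V := State (Om T) (Uv T) (Qv T) (Wv T) (E1 T) V (Z1 T) (Z2 T).
Definition with_Z1 (T : state) V := State (Om T) (Uv T) (Qv T) (Wv T) (E1 T) (E2 T) V (Z2 T).
Definition with_Z2 (T : state) V := State (Om T) (Uv T) (Qv T) (Wv T) (E1 T) (E2 T) (Z1 T) V.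

Definition stnorm (T : state) : R :=
  Num.max (fnorm (Om T)) (Num.max (fnorm (Uv T)) (Num.max (fnorm (Qv T))
  (Num.max (fnorm (Wv T)) (Num.max (fnorm (E1 T)) (Num.max (fnorm (E2 T))
  (Num.max (fnorm (Z1 T)) (fnorm (Z2 T)))))))).

Definition stdist (T T' : state) : R :=
  Num.max (fnorm (Om T - Om T')) (Num.max (fnorm (Uv T - Uv T'))
  (Num.max (fnorm (Qv T - Qv T')) (Num.max (fnorm (Wv T - Wv T'))
  (Num.max (fnorm (E1 T - E1 T')) (Num.max (fnorm (E2 T - E2 T'))
  (Num.max (fnorm (Z1 T - Z1 T')) (fnorm (Z2 T - Z2 T')))))))).

Variables (X : 'M[R]_(m, n)) (H : 'M[R]_(s, n)) (Y : 'M[R]_(c, n)) (P : adm_params).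

Definition Lag (T : state) : R :=
  2^-1 * fnorm (Uv T - Om T *m X) ^+ 2 + lam1 P * l1norm (Uv T)
  + rho1 P / 2 * fnorm (E1 T) ^+ 2 + rho2 P / 2 * fnorm (E2 T) ^+ 2
  + mxinner (Z1 T) (H - Qv T *m Uv T - E1 T)
  + mxinner (Z2 T) (Y - Wv T *m Qv T *m Uv T - E2 T)
  + mu P / 2 * fnorm (H - Qv T *m Uv T - E1 T) ^+ 2
  + mu P / 2 * fnorm (Y - Wv T *m Qv T *m Uv T - E2 T) ^+ 2
  + del1 P / 2 * fnorm (Qv T) ^+ 2 + del2 P / 2 * fnorm (Wv T) ^+ 2
  + lam2 P / 2 * fnorm (Om T) ^+ 2.

Definition Ls (T : state) : R := Lag T - lam1 P * l1norm (Uv T).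

Definition adm_step (etaU etaQ etaW : R) (Tk Tk1 : state) : Prop :=
  let T1 := with_U Tk (Uv Tk1) in
  let T2 := with_Q T1 (Qv Tk1) in
  let T3 := with_W T2 (Wv Tk1) in
  let T4 := with_Om T3 (Om Tk1) in
  let T5 := with_E1 T4 (E1 Tk1) in
  (exists GU, is_grad (fun V => Ls (with_U Tk V)) (Uv Tk) GU /\
        Uv Tk1 = soft (lam1 P / (mu P * etaU)) (Uv Tk - (mu P * etaU)^-1 *: GU)) /\
      (exists GQ, is_grad (fun V => Lag (with_Q T1 V)) (Qv T1) GQ /\
        Qv Tk1 = Qv Tk - (mu P * etaQ)^-1 *: GQ) /\
      (exists GW, is_grad (fun V => Lag (with_W T2 V)) (Wv T2) GW /\
        Wv Tk1 = Wv Tk - (mu P * etaW)^-1 *: GW) /\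
      is_argmin (fun V => Lag (with_Om T3 V)) (Om Tk1) /\
      is_argmin (fun V => Lag (with_E1 T4 V)) (E1 Tk1) /\
      is_argmin (fun V => Lag (with_E2 T5 V)) (E2 Tk1) /\
      Z1 Tk1 = Z1 Tk + mu P *: (H - Qv Tk1 *m Uv Tk1 - E1 Tk1) /\
      Z2 Tk1 = Z2 Tk + mu P *: (Y - Wv Tk1 *m Qv Tk1 *m Uv Tk1 - E2 Tk1).

Definition in_S (Rad : R) (T : state) : Prop :=
  stnorm T < Rad /\
  (exists GU G, is_grad (fun V => Ls (with_U T V)) (Uv T) GU /\
                is_subgrad (@l1norm r n) (Uv T) G /\
                - GU = lam1 P *: G) /\
  is_grad (fun V => Ls (with_Om T V)) (Om T) 0 /\
  is_grad (fun V => Ls (with_Q T V)) (Qv T) 0 /\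
  is_grad (fun V => Ls (with_W T V)) (Wv T) 0 /\
  is_grad (fun V => Ls (with_E1 T V)) (E1 T) 0 /\
  is_grad (fun V => Ls (with_E2 T V)) (E2 T) 0 /\
  is_grad (fun V => Ls (with_Z1 T V)) (Z1 T) 0 /\
  is_grad (fun V => Ls (with_Z2 T V)) (Z2 T) 0 /\
  H = Qv T *m Uv T + E1 T /\
  Y = Wv T *m Qv T *m Uv T + E2 T.

End Dims.
End ADM.

(* Main.v *)
Require Import Defs.
From HB Require Import structures.
From mathcomp Require Import all_boot all_order all_algebra.
From mathcomp Require Import all_classical all_reals all_analysis.
From mathcomp Require Import ring lra zify.
Import Order.TTheory GRing.Theory Num.Theory.
Local Open Scope ring_scope.

Module Aux.
Set Implicit Arguments. Unset Strict Implicit. Unset Printing Implicit Defensive.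

Section Basic.
Variable R : realType.

Definition sqn (a b : nat) (A : 'M[R]_(a, b)) : R := \sum_(i < a) \sum_(j < b) (A i j) ^+ 2.

Lemma mxinnerE a b (A B : 'M[R]_(a, b)) :
  mxinner A B = \sum_(i < a) \sum_(j < b) A i j * B i j.
Proof.
rewrite /mxinner /mxtrace exchange_big /=; apply: eq_bigr => j _.
by rewrite !mxE; apply: eq_bigr => i _; rewrite !mxE.
Qed.

Lemma sqnE a b (A : 'M[R]_(a, b)) : sqn A = mxinner A A.
Proof. by rewrite mxinnerE; apply: eq_bigr => i _; apply: eq_bigr => j _; rewrite expr2. Qed.

Lemma sqn_ge0 a b (A : 'M[R]_(a, b)) : 0 <= sqn A.
Proof. by apply: sumr_ge0 => i _; apply: sumr_ge0 => j _; exact: sqr_ge0. Qed.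

Lemma fnorm_sq a b (A : 'M[R]_(a, b)) : fnorm A ^+ 2 = sqn A.
Proof. by rewrite /fnorm sqr_sqrtr // sqn_ge0. Qed.

Lemma mxinnerC a b (A B : 'M[R]_(a, b)) : mxinner A B = mxinner B A.
Proof. by rewrite !mxinnerE; apply: eq_bigr => i _; apply: eq_bigr => j _; rewrite mulrC. Qed.

Lemma mxinnerDr a b (A B C : 'M[R]_(a, b)) : mxinner A (B + C) = mxinner A B + mxinner A C.
Proof. by rewrite /mxinner mulmxDr mxtraceD. Qed.

Lemma mxinnerZr a b (A B : 'M[R]_(a, b)) k : mxinner A (k *: B) = k * mxinner A B.
Proof. by rewrite /mxinner -scalemxAr mxtraceZ. Qed.

Lemma mxinnerNr a b (A B : 'M[R]_(a, b)) : mxinner A (- B) = - mxinner A B.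
Proof. by rewrite -scaleN1r mxinnerZr mulN1r. Qed.

Lemma mxinnerBr a b (A B C : 'M[R]_(a, b)) : mxinner A (B - C) = mxinner A B - mxinner A C.
Proof. by rewrite mxinnerDr mxinnerNr. Qed.

Lemma mxinnerDl a b (A B C : 'M[R]_(a, b)) : mxinner (B + C) A = mxinner B A + mxinner C A.
Proof. by rewrite mxinnerC mxinnerDr !(mxinnerC A). Qed.

Lemma mxinnerZl a b (A B : 'M[R]_(a, b)) k : mxinner (k *: B) A = k * mxinner B A.
Proof. by rewrite mxinnerC mxinnerZr mxinnerC. Qed.

Lemma mxinnerNl a b (A B : 'M[R]_(a, b)) : mxinner (- B) A = - mxinner B A.
Proof. by rewrite mxinnerC mxinnerNr mxinnerC. Qed.

Lemma mxinnerBl a b (A B C : 'M[R]_(a, b)) : mxinner (B - C) A = mxinner B A - mxinner C A.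
Proof. by rewrite mxinnerDl mxinnerNl. Qed.

Lemma mxinner0r a b (A : 'M[R]_(a, b)) : mxinner A 0 = 0.
Proof. by rewrite /mxinner mulmx0 mxtrace0. Qed.

Lemma mxinner0l a b (A : 'M[R]_(a, b)) : mxinner 0 A = 0.
Proof. by rewrite mxinnerC mxinner0r. Qed.

Lemma mxinner_mull a b p (A : 'M[R]_(p, a)) (B : 'M[R]_(a, b)) C :
  mxinner C (A *m B) = mxinner (A^T *m C) B.
Proof. by rewrite /mxinner trmx_mul trmxK mulmxA. Qed.

Lemma mxinner_mulr a b p (A : 'M[R]_(a, p)) (B : 'M[R]_(p, b)) C :
  mxinner C (A *m B) = mxinner (C *m B^T) A.
Proof.
rewrite /mxinner trmx_mul trmxK mulmxA mxtrace_mulC mulmxA; congr (\tr _).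
Qed.

Lemma sqnD a b (A B : 'M[R]_(a, b)) : sqn (A + B) = sqn A + 2 * mxinner A B + sqn B.
Proof. rewrite !sqnE mxinnerDl !mxinnerDr (mxinnerC B A); ring. Qed.

Lemma sqnN a b (A : 'M[R]_(a, b)) : sqn (- A) = sqn A.
Proof. by rewrite !sqnE mxinnerNl mxinnerNr opprK. Qed.

Lemma sqnZ a b (A : 'M[R]_(a, b)) k : sqn (k *: A) = k ^+ 2 * sqn A.
Proof. by rewrite !sqnE mxinnerZl mxinnerZr mulrA expr2. Qed.

Lemma sqnB a b (A B : 'M[R]_(a, b)) : sqn (A - B) = sqn A - 2 * mxinner A B + sqn B.
Proof. by rewrite sqnD mxinnerNr sqnN mulrN. Qed.

Lemma sqnD_le a b (A B : 'M[R]_(a, b)) : sqn (A + B) <= 2 * sqn A + 2 * sqn B.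
Proof.
have := sqn_ge0 (A - B); rewrite sqnB sqnD => h.
lra.
Qed.

Lemma sqn0 a b : sqn (0 : 'M[R]_(a, b)) = 0.
Proof. by rewrite sqnE mxinner0l. Qed.

Lemma entry_le_sqn a b (A : 'M[R]_(a, b)) i j : A i j ^+ 2 <= sqn A.
Proof.
rewrite /sqn (bigD1 i) //= (bigD1 j) //= -addrA lerDl.
apply: addr_ge0; first by apply: sumr_ge0 => k _; exact: sqr_ge0.
by apply: sumr_ge0 => k _; apply: sumr_ge0 => l _; exact: sqr_ge0.
Qed.

Lemma sqn_eq0 a b (A : 'M[R]_(a, b)) : sqn A = 0 -> A = 0.
Proof.
move=> h; apply/matrixP => i j; rewrite mxE.
have := entry_le_sqn A i j; rewrite h => h2.
have : A i j ^+ 2 = 0 by apply/eqP; rewrite eq_le h2 sqr_ge0.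
by move/eqP; rewrite sqrf_eq0 => /eqP.
Qed.

Lemma mxinner_inj a b (G G' : 'M[R]_(a, b)) :
  (forall D, mxinner G D = mxinner G' D) -> G = G'.
Proof.
move=> h; apply/eqP; rewrite -subr_eq0; apply/eqP/sqn_eq0.
by rewrite sqnE mxinnerBl h subrr.
Qed.

Lemma cs_sum p (f g : 'I_p -> R) :
  (\sum_i f i * g i) ^+ 2 <= (\sum_i f i ^+ 2) * (\sum_i g i ^+ 2).
Proof.
set a := \sum_i f i ^+ 2; set b := \sum_i f i * g i; set c := \sum_i g i ^+ 2.
have key t : 0 <= a - 2 * t * b + t ^+ 2 * c.
  have -> : a - 2 * t * b + t ^+ 2 * c = \sum_i (f i - t * g i) ^+ 2.
    rewrite /a /b /c mulr_sumr mulr_sumr -sumrN -!big_split /=.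
    by apply: eq_bigr => i _; ring.
  by apply: sumr_ge0 => i _; exact: sqr_ge0.
have c0 : 0 <= c by apply: sumr_ge0 => i _; exact: sqr_ge0.
have a0 : 0 <= a by apply: sumr_ge0 => i _; exact: sqr_ge0.
have [cz|cp] := eqVneq c 0.
  have b0 : b = 0.
    rewrite /b big1 // => i _.
    have : g i ^+ 2 = 0.
      apply/eqP; rewrite eq_le sqr_ge0 andbT -cz /c (bigD1 i) //= lerDl.
      by apply: sumr_ge0 => k _; exact: sqr_ge0.
    by move/eqP; rewrite sqrf_eq0 => /eqP ->; rewrite mulr0.
  by rewrite b0 cz expr0n /= mulr0.
have cpos : 0 < c by rewrite lt_def cp c0.
have := key (b / c).
have -> : a - 2 * (b / c) * b + (b / c) ^+ 2 * c = (a * c - b ^+ 2) / c.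
  by field.
rewrite pmulr_lge0 ?invr_gt0 // subr_ge0 => h; lra.
Qed.

Lemma sqn_mul a b p (A : 'M[R]_(a, p)) (B : 'M[R]_(p, b)) :
  sqn (A *m B) <= sqn A * sqn B.
Proof.
have hB : forall j, \sum_k B k j ^+ 2 <= sqn B.
  move=> j; rewrite /sqn exchange_big /= (bigD1 j) //= lerDl.
  by apply: sumr_ge0 => l _; apply: sumr_ge0 => k _; exact: sqr_ge0.
rewrite /sqn big_distrl /=.
apply: ler_sum => i _.
apply: (@le_trans _ _ (\sum_(j < b) (\sum_k A i k ^+ 2) * (\sum_k B k j ^+ 2))).
  apply: ler_sum => j _; rewrite mxE.
  exact: (cs_sum (fun k => A i k) (fun k => B k j)).
rewrite -big_distrr /= ler_wpM2l //; first by apply: sumr_ge0 => k _; exact: sqr_ge0.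
by rewrite exchange_big.
Qed.

End Basic.

Section QE.
Variable R : realType.

Lemma poly2_derive (a g c : R) :
  is_derive (0:R) (1:R) (fun t : R => a + t * g + t ^+ 2 * c) g.
Proof.
have -> : (fun t : R => a + t * g + t ^+ 2 * c) = (cst a + ( *%R^~ g) + (fun t => t ^+ 2 * c)).
  by apply/funext => t.
apply: is_derive_eq.
rewrite expr0n /= !(scale0r, scaler0, add0r, addr0). exact: mulr1.
Qed.

Definition QE a b (f : 'M[R]_(a, b) -> R) V G (c : 'M[R]_(a, b) -> R) :=
  forall D t, f (V + t *: D) = f V + t * mxinner G D + t ^+ 2 * c D.

Lemma QE_grad a b (f : 'M[R]_(a, b) -> R) V G c : QE f V G c -> is_grad f V G.
Proof.
move=> h D.
have -> : (fun t => f (V + t *: D)) = (fun t => f V + t * mxinner G D + t ^+ 2 * c D).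
  by apply/funext => t; rewrite h.
exact: poly2_derive.
Qed.

Lemma grad_uniq a b (f : 'M[R]_(a, b) -> R) V G G' :
  is_grad f V G -> is_grad f V G' -> G = G'.
Proof.
move=> h1 h2; apply: mxinner_inj => D.
by rewrite -(@derive_val _ _ _ _ _ _ _ (h1 D)) (@derive_val _ _ _ _ _ _ _ (h2 D)).
Qed.

Lemma QE_grad_eq a b (f : 'M[R]_(a, b) -> R) V G G' c :
  QE f V G c -> is_grad f V G' -> G' = G.
Proof. by move=> h1 h2; apply: grad_uniq h2 (QE_grad h1). Qed.

Lemma QE_argmin a b (f : 'M[R]_(a, b) -> R) V G c :
  QE f V G c -> is_argmin f V -> G = 0.
Proof.
move=> h hm; apply: mxinner_inj => D; rewrite mxinner0l.
set bb := mxinner G D; set cc := c D.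
have key t : 0 <= t * bb + t ^+ 2 * cc.
  have := hm (V + t *: D); rewrite h /bb /cc => hh; lra.
set K := `|cc| + 1.
have K0 : 0 < K by rewrite /K ltr_pwDr // normr_ge0.
have := key (- bb / K).
have -> : - bb / K * bb + (- bb / K) ^+ 2 * cc = bb ^+ 2 * (cc - K) / K ^+ 2.
  by field; rewrite gt_eqF.
rewrite pmulr_lge0; last by rewrite invr_gt0 exprn_gt0.
move=> hh.
have hcK : cc - K <= -1 by rewrite /K; have := ler_norm cc; lra.
have hb2 : 0 <= bb ^+ 2 := sqr_ge0 bb.
have : bb ^+ 2 <= 0 by nra.
move=> hle; have : bb ^+ 2 = 0 by apply/eqP; rewrite eq_le hle hb2.
by move/eqP; rewrite sqrf_eq0 => /eqP.
Qed.

Lemma QE_step a b (f : 'M[R]_(a, b) -> R) V G c D :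
  QE f V G c -> f (V + D) = f V + mxinner G D + c D.
Proof. by move=> h; have := h D 1; rewrite scale1r expr1n !mul1r. Qed.

Lemma QE_add a b (f g : 'M[R]_(a, b) -> R) V G1 G2 c1 c2 :
  QE f V G1 c1 -> QE g V G2 c2 ->
  QE (fun W => f W + g W) V (G1 + G2) (fun D => c1 D + c2 D).
Proof. by move=> h1 h2 D t; rewrite h1 h2 mxinnerDl; ring. Qed.

Lemma QE_cst a b (k : R) (V : 'M[R]_(a, b)) : QE (fun _ => k) V 0 (fun _ => 0).
Proof. by move=> D t; rewrite mxinner0l; ring. Qed.

Lemma QE_ext a b (f g : 'M[R]_(a, b) -> R) V G c :
  (forall W, f W = g W) -> QE f V G c -> QE g V G c.
Proof. by move=> e h D t; rewrite -!e h. Qed.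

Lemma QE_addc a b (f : 'M[R]_(a, b) -> R) V G c k :
  QE f V G c -> QE (fun W => f W + k) V G c.
Proof. by move=> h D t; rewrite h; ring. Qed.

Lemma QE_term a b p q (M N : 'M[R]_(a, b) -> 'M[R]_(p, q)) (Nadj : 'M[R]_(p, q) -> 'M[R]_(a, b))
  (al : R) (z : 'M[R]_(p, q)) V :
  (forall D t, M (V + t *: D) = M V + t *: N D) ->
  (forall G D, mxinner G (N D) = mxinner (Nadj G) D) ->
  QE (fun W => al / 2 * sqn (M W) + mxinner z (M W)) V (Nadj (al *: M V + z))
     (fun D => al / 2 * sqn (N D)).
Proof.
move=> hM hN D t; rewrite hM sqnD sqnZ mxinnerDr mxinnerZr mxinnerZr -hN.
rewrite mxinnerDl mxinnerZl; by field.
Qed.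

Lemma QE_lin a b (K V : 'M[R]_(a, b)) : QE (fun W => mxinner W K) V K (fun _ => 0).
Proof. by move=> D t; rewrite mxinnerDl mxinnerZl (mxinnerC K D); ring. Qed.

End QE.

Section Blocks.
Variable R : realType.
Variables m n r s c : nat.
Variables (X : 'M[R]_(m, n)) (H : 'M[R]_(s, n)) (Y : 'M[R]_(c, n)) (P : adm_params R).

Local Notation st := (state R m n r s c).
Local Notation Lag := (Lag X H Y P).
Local Notation Ls := (Ls X H Y P).

Definition r1 (T : st) := H - Qv T *m Uv T - E1 T.
Definition r2 (T : st) := Y - Wv T *m Qv T *m Uv T - E2 T.

Definition GU (T : st) := (Uv T - Om T *m X) - (Qv T)^T *m (mu P *: r1 T + Z1 T)
   - (Wv T *m Qv T)^T *m (mu P *: r2 T + Z2 T).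
Definition GQ (T : st) := del1 P *: Qv T - (mu P *: r1 T + Z1 T) *m (Uv T)^T
   - (Wv T)^T *m ((mu P *: r2 T + Z2 T) *m (Uv T)^T).
Definition GW (T : st) := del2 P *: Wv T - (mu P *: r2 T + Z2 T) *m (Uv T)^T *m (Qv T)^T.
Definition GOm (T : st) := lam2 P *: Om T - (Uv T - Om T *m X) *m X^T.
Definition GE1 (T : st) := rho1 P *: E1 T - (mu P *: r1 T + Z1 T).
Definition GE2 (T : st) := rho2 P *: E2 T - (mu P *: r2 T + Z2 T).

Definition cU (T : st) (D : 'M[R]_(r, n)) :=
  2^-1 * sqn D + mu P / 2 * sqn (Qv T *m D) + mu P / 2 * sqn (Wv T *m Qv T *m D).
Definition cQ (T : st) (D : 'M[R]_(s, r)) :=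
  mu P / 2 * sqn (D *m Uv T) + mu P / 2 * sqn (Wv T *m D *m Uv T) + del1 P / 2 * sqn D.
Definition cW (T : st) (D : 'M[R]_(c, s)) :=
  mu P / 2 * sqn (D *m Qv T *m Uv T) + del2 P / 2 * sqn D.
Definition cOm (T : st) (D : 'M[R]_(r, m)) :=
  2^-1 * sqn (D *m X) + lam2 P / 2 * sqn D.
Definition cE1 (D : 'M[R]_(s, n)) := (rho1 P + mu P) / 2 * sqn D.
Definition cE2 (D : 'M[R]_(c, n)) := (rho2 P + mu P) / 2 * sqn D.

Lemma Lag_sq (T : st) : Lag T =
  2^-1 * sqn (Uv T - Om T *m X) + lam1 P * l1norm (Uv T)
  + rho1 P / 2 * sqn (E1 T) + rho2 P / 2 * sqn (E2 T)
  + mxinner (Z1 T) (r1 T) + mxinner (Z2 T) (r2 T)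
  + mu P / 2 * sqn (r1 T) + mu P / 2 * sqn (r2 T)
  + del1 P / 2 * sqn (Qv T) + del2 P / 2 * sqn (Wv T)
  + lam2 P / 2 * sqn (Om T).
Proof. by rewrite /Lag !fnorm_sq. Qed.

Lemma Ls_Lag (T : st) : Ls T = Lag T - lam1 P * l1norm (Uv T).
Proof. by []. Qed.

Lemma QE_diff a b (f g : 'M[R]_(a, b) -> R) V G cc :
  (forall W, f W - g W = f V - g V) -> QE g V G cc -> QE f V G cc.
Proof.
move=> e h D t; have := e (V + t *: D); rewrite h => e2.
have -> : f (V + t *: D) = (f V - g V) + (g V + t * mxinner G D + t ^+ 2 * cc D) by rewrite -e2; ring.
ring.
Qed.

Lemma QE_Geq a b (f : 'M[R]_(a, b) -> R) V G G' cc cc' :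
  G = G' -> (forall D, cc D = cc' D) -> QE f V G cc -> QE f V G' cc'.
Proof. by move=> <- e h D t; rewrite h e. Qed.

Lemma id_hM a b (V D : 'M[R]_(a, b)) t : V + t *: D = V + t *: D.
Proof. by []. Qed.

Ltac mxeq := apply/matrixP => i j; rewrite !mxE; ring.

Lemma QE_LsU (T : st) : QE (fun V => Ls (with_U T V)) (Uv T) (GU T) (cU T).
Proof.
set M1 := fun V : 'M[R]_(r, n) => V - Om T *m X.
set M2 := fun V : 'M[R]_(r, n) => H - Qv T *m V - E1 T.
set M3 := fun V : 'M[R]_(r, n) => Y - Wv T *m Qv T *m V - E2 T.
have q1 := @QE_term _ _ _ _ _ M1 id id 1 0 (Uv T)
  (fun D t => ltac:(rewrite /M1; mxeq)) (fun G D => erefl).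
have q2 := @QE_term _ _ _ _ _ M2 (fun D => - (Qv T *m D)) (fun G => - ((Qv T)^T *m G)) (mu P) (Z1 T) (Uv T)
  (fun D t => ltac:(rewrite /M2 mulmxDr -scalemxAr; mxeq))
  (fun G D => ltac:(by rewrite mxinnerNr mxinnerNl mxinner_mull)).
have q3 := @QE_term _ _ _ _ _ M3 (fun D => - (Wv T *m Qv T *m D)) (fun G => - ((Wv T *m Qv T)^T *m G)) (mu P) (Z2 T) (Uv T)
  (fun D t => ltac:(rewrite /M3 mulmxDr -scalemxAr; mxeq))
  (fun G D => ltac:(by rewrite mxinnerNr mxinnerNl mxinner_mull)).
have q := QE_add (QE_add q1 q2) q3.
apply: QE_diff _ (QE_Geq _ _ q).
- by move=> W; rewrite /Ls !Lag_sq /= /M1 /M2 /M3 /r1 /r2 /= !mxinner0l; field.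
- by rewrite /GU /M1 /r1 /r2 scale1r addr0.
- by move=> D; rewrite /cU /= !sqnN; field.
Qed.

Lemma QE_LagQ (T : st) : QE (fun V => Lag (with_Q T V)) (Qv T) (GQ T) (cQ T).
Proof.
set M1 := fun V : 'M[R]_(s, r) => H - V *m Uv T - E1 T.
set M2 := fun V : 'M[R]_(s, r) => Y - Wv T *m V *m Uv T - E2 T.
have q1 := @QE_term _ _ _ _ _ M1 (fun D => - (D *m Uv T)) (fun G => - (G *m (Uv T)^T)) (mu P) (Z1 T) (Qv T)
  (fun D t => ltac:(rewrite /M1 mulmxDl -scalemxAl; mxeq))
  (fun G D => ltac:(by rewrite mxinnerNr mxinnerNl mxinner_mulr)).
have q2 := @QE_term _ _ _ _ _ M2 (fun D => - (Wv T *m D *m Uv T)) (fun G => - ((Wv T)^T *m (G *m (Uv T)^T))) (mu P) (Z2 T) (Qv T)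
  (fun D t => ltac:(rewrite /M2 mulmxDr mulmxDl -scalemxAr -scalemxAl; mxeq))
  (fun G D => ltac:(by rewrite mxinnerNr mxinnerNl mxinner_mulr mxinner_mull)).
have q3 := @QE_term _ _ _ _ _ id id id (del1 P) 0 (Qv T)
  (fun D t => erefl) (fun G D => erefl).
have q := QE_add (QE_add q1 q2) q3.
apply: QE_diff _ (QE_Geq _ _ q).
- by move=> W; rewrite !Lag_sq /= /M1 /M2 /r1 /r2 /= !mxinner0l; field.
- by rewrite /GQ /M1 /M2 /r1 /r2 /= addr0; mxeq.
- by move=> D; rewrite /cQ /= !sqnN; field.
Qed.

Lemma QE_LagW (T : st) : QE (fun V => Lag (with_W T V)) (Wv T) (GW T) (cW T).
Proof.
set M1 := fun V : 'M[R]_(c, s) => Y - V *m Qv T *m Uv T - E2 T.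
have q1 := @QE_term _ _ _ _ _ M1 (fun D => - (D *m Qv T *m Uv T)) (fun G => - (G *m (Uv T)^T *m (Qv T)^T)) (mu P) (Z2 T) (Wv T)
  (fun D t => ltac:(rewrite /M1 !mulmxDl -!scalemxAl; mxeq))
  (fun G D => ltac:(by rewrite mxinnerNr mxinnerNl !mxinner_mulr)).
have q3 := @QE_term _ _ _ _ _ id id id (del2 P) 0 (Wv T)
  (fun D t => erefl) (fun G D => erefl).
have q := QE_add q1 q3.
apply: QE_diff _ (QE_Geq _ _ q).
- by move=> W; rewrite !Lag_sq /= /M1 /r1 /r2 /= !mxinner0l; field.
- by rewrite /GW /M1 /r2 /= addr0; mxeq.
- by move=> D; rewrite /cW /= !sqnN; field.
Qed.

Lemma QE_LagOm (T : st) : QE (fun V => Lag (with_Om T V)) (Om T) (GOm T) (cOm T).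
Proof.
set M1 := fun V : 'M[R]_(r, m) => Uv T - V *m X.
have q1 := @QE_term _ _ _ _ _ M1 (fun D => - (D *m X)) (fun G => - (G *m X^T)) 1 0 (Om T)
  (fun D t => ltac:(rewrite /M1 !mulmxDl -!scalemxAl; mxeq))
  (fun G D => ltac:(by rewrite mxinnerNr mxinnerNl !mxinner_mulr)).
have q3 := @QE_term _ _ _ _ _ id id id (lam2 P) 0 (Om T)
  (fun D t => erefl) (fun G D => erefl).
have q := QE_add q1 q3.
apply: QE_diff _ (QE_Geq _ _ q).
- by move=> W; rewrite !Lag_sq /= /M1 /r1 /r2 /= !mxinner0l; field.
- by rewrite /GOm /M1 /= !addr0 scale1r; mxeq.
- by move=> D; rewrite /cOm /= !sqnN; field.
Qed.

Lemma QE_LagE1 (T : st) : QE (fun V => Lag (with_E1 T V)) (E1 T) (GE1 T) cE1.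
Proof.
set M1 := fun V : 'M[R]_(s, n) => H - Qv T *m Uv T - V.
have q1 := @QE_term _ _ _ _ _ M1 (fun D => - D) (fun G => - G) (mu P) (Z1 T) (E1 T)
  (fun D t => ltac:(rewrite /M1; mxeq))
  (fun G D => ltac:(by rewrite mxinnerNr mxinnerNl)).
have q3 := @QE_term _ _ _ _ _ id id id (rho1 P) 0 (E1 T)
  (fun D t => erefl) (fun G D => erefl).
have q := QE_add q1 q3.
apply: QE_diff _ (QE_Geq _ _ q).
- by move=> W; rewrite !Lag_sq /= /M1 /r1 /r2 /= !mxinner0l; field.
- by rewrite /GE1 /M1 /r1 /= !addr0; mxeq.
- by move=> D; rewrite /cE1 /= !sqnN; field.
Qed.

Lemma QE_LagE2 (T : st) : QE (fun V => Lag (with_E2 T V)) (E2 T) (GE2 T) cE2.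
Proof.
set M1 := fun V : 'M[R]_(c, n) => Y - Wv T *m Qv T *m Uv T - V.
have q1 := @QE_term _ _ _ _ _ M1 (fun D => - D) (fun G => - G) (mu P) (Z2 T) (E2 T)
  (fun D t => ltac:(rewrite /M1; mxeq))
  (fun G D => ltac:(by rewrite mxinnerNr mxinnerNl)).
have q3 := @QE_term _ _ _ _ _ id id id (rho2 P) 0 (E2 T)
  (fun D t => erefl) (fun G D => erefl).
have q := QE_add q1 q3.
apply: QE_diff _ (QE_Geq _ _ q).
- by move=> W; rewrite !Lag_sq /= /M1 /r1 /r2 /= !mxinner0l; field.
- by rewrite /GE2 /M1 /r2 /= !addr0; mxeq.
- by move=> D; rewrite /cE2 /= !sqnN; field.
Qed.

Lemma QE_LsZ1 (T : st) : QE (fun V => Ls (with_Z1 T V)) (Z1 T) (r1 T) (fun _ => 0).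
Proof.
apply: QE_diff (QE_lin (r1 T) (Z1 T)).
by move=> W; rewrite /Ls !Lag_sq /= /r1 /r2 /=; field.
Qed.

Lemma QE_LsZ2 (T : st) : QE (fun V => Ls (with_Z2 T V)) (Z2 T) (r2 T) (fun _ => 0).
Proof.
apply: QE_diff (QE_lin (r2 T) (Z2 T)).
by move=> W; rewrite /Ls !Lag_sq /= /r1 /r2 /=; field.
Qed.

Lemma QE_LsQ (T : st) : QE (fun V => Ls (with_Q T V)) (Qv T) (GQ T) (cQ T).
Proof. by apply: QE_diff (QE_LagQ T) => W; rewrite /Ls /=; ring. Qed.
Lemma QE_LsW (T : st) : QE (fun V => Ls (with_W T V)) (Wv T) (GW T) (cW T).
Proof. by apply: QE_diff (QE_LagW T) => W; rewrite /Ls /=; ring. Qed.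
Lemma QE_LsOm (T : st) : QE (fun V => Ls (with_Om T V)) (Om T) (GOm T) (cOm T).
Proof. by apply: QE_diff (QE_LagOm T) => W; rewrite /Ls /=; ring. Qed.
Lemma QE_LsE1 (T : st) : QE (fun V => Ls (with_E1 T V)) (E1 T) (GE1 T) cE1.
Proof. by apply: QE_diff (QE_LagE1 T) => W; rewrite /Ls /=; ring. Qed.
Lemma QE_LsE2 (T : st) : QE (fun V => Ls (with_E2 T V)) (E2 T) (GE2 T) cE2.
Proof. by apply: QE_diff (QE_LagE2 T) => W; rewrite /Ls /=; ring. Qed.

End Blocks.

Section Soft.
Variable R : realType.

Lemma soft_scalar (t x : R) : 0 < t ->
  let p := Num.sg x * Num.max (`|x| - t) 0 in
  `|(x - p) / t| <= 1 /\ (x - p) / t * p = `|p|.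
Proof.
move=> t0 p.
have tn : t != 0 by rewrite gt_eqF.
have [xt|xt] := leP (`|x| - t) 0.
  have -> : p = 0 by rewrite /p max_r // mulr0.
  rewrite subr0 normr0 mulr0; split => //.
  rewrite normrM (@gtr0_norm _ t^-1) ?invr_gt0 // ler_pdivrMr // mul1r; lra.
have [xp|xn|x0] := ltrgt0P x.
- have nx : `|x| = x := gtr0_norm xp.
  have ep : p = x - t by rewrite /p gtr0_sg // mul1r nx max_l // ltW // -nx.
  have e1 : (x - p) / t = 1 by rewrite ep; field.
  rewrite nx in xt; rewrite e1 normr1 mul1r ep gtr0_norm //.
- have nx : `|x| = - x := ltr0_norm xn.
  have ep : p = x + t by rewrite /p ltr0_sg // nx max_l; [ring| apply: ltW; rewrite -nx].
  have e1 : (x - p) / t = -1 by rewrite ep; field.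
  rewrite e1 normrN1 ep ltr0_norm; [split => //; ring|]; rewrite nx in xt; lra.
- by rewrite x0 normr0 in xt; lra.
Qed.

Definition l1sub a b (U S : 'M[R]_(a, b)) :=
  forall i j, `|S i j| <= 1 /\ S i j * U i j = `|U i j|.

Lemma l1sub_subgrad a b (U S : 'M[R]_(a, b)) : l1sub U S -> is_subgrad (@l1norm R a b) U S.
Proof.
move=> h V; rewrite mxinnerE /l1norm -big_split /=; apply: ler_sum => i _.
rewrite -big_split /=; apply: ler_sum => j _.
have [h1 h2] := h i j; rewrite !mxE mulrBr h2.
have : S i j * V i j <= `|V i j|.
  apply: le_trans (ler_norm _) _; rewrite normrM.
  by apply: ler_piMl.
lra.
Qed.

Lemma l1norm_ge0 a b (U : 'M[R]_(a, b)) : 0 <= l1norm U.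
Proof. by apply: sumr_ge0 => i _; apply: sumr_ge0 => j _. Qed.

Lemma soft_mx a b (A : R) (lam : R) (U0 G : 'M[R]_(a, b)) : 0 < A -> 0 < lam ->
  let U1 := soft (lam / A) (U0 - A^-1 *: G) in
  exists S, l1sub U1 S /\ G + A *: (U1 - U0) = - (lam *: S).
Proof.
move=> A0 l0 U1.
set W := U0 - A^-1 *: G.
exists ((A / lam) *: (W - U1)); split.
  move=> i j.
  have eS : ((A / lam) *: (W - U1)) i j = A / lam * (W i j - U1 i j) by rewrite !mxE.
  have eU : U1 i j = Num.sg (W i j) * Num.max (`|W i j| - lam / A) 0 by rewrite /U1 /soft mxE.
  rewrite eS eU; move: (W i j) => w.
  have t0 : 0 < lam / A by rewrite divr_gt0.
  have [h1 h2] := soft_scalar w t0.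
  have e : A / lam * (w - Num.sg w * Num.max (`|w| - lam / A) 0)
      = (w - Num.sg w * Num.max (`|w| - lam / A) 0) / (lam / A).
    by field; rewrite !gt_eqF.
  by rewrite e; split.
rewrite scalerA mulrCA divff ?gt_eqF // mulr1 /W.
apply/matrixP => i j; rewrite !mxE; field; by rewrite gt_eqF.
Qed.

End Soft.

Section Steps.
Variable R : realType.
Variables m n r s c : nat.
Variables (X : 'M[R]_(m, n)) (H : 'M[R]_(s, n)) (Y : 'M[R]_(c, n)) (P : adm_params R).
Hypothesis Ppos : params_pos P.

Local Notation st := (state R m n r s c).
Local Notation Lag := (Lag X H Y P).
Local Notation Ls := (Ls X H Y P).

Definition Bd (T : st) := Lag T + (sqn (Z1 T) + sqn (Z2 T)) / (2 * mu P).
Definition c0 := 4 * (1 + sqn X) * (1 + (lam2 P)^-1 + (del1 P)^-1 + (del2 P)^-1 + (rho1 P)^-1 + (rho2 P)^-1).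
Definition Kc (Bb : R) := 1 + del1 P + del2 P + mu P * Bb + mu P * Bb ^+ 2.

Lemma mu_gt0 : 0 < mu P. Proof. by case: Ppos => _ [_ [_ [_ [_ [_ ]]]]]. Qed.
Lemma lam1_gt0 : 0 < lam1 P. Proof. by case: Ppos. Qed.
Lemma lam2_gt0 : 0 < lam2 P. Proof. by case: Ppos => _ []. Qed.
Lemma rho1_gt0 : 0 < rho1 P. Proof. by case: Ppos => _ [_ []]. Qed.
Lemma rho2_gt0 : 0 < rho2 P. Proof. by case: Ppos => _ [_ [_ []]]. Qed.
Lemma del1_gt0 : 0 < del1 P. Proof. by case: Ppos => _ [_ [_ [_ []]]]. Qed.
Lemma del2_gt0 : 0 < del2 P. Proof. by case: Ppos => _ [_ [_ [_ [_ []]]]]. Qed.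

Lemma inner_lb a b (Z r0 : 'M[R]_(a, b)) :
  - (sqn Z / (2 * mu P)) <= mxinner Z r0 + mu P / 2 * sqn r0.
Proof.
have mu0 := mu_gt0.
have h : 0 <= mu P / 2 * sqn (r0 + (mu P)^-1 *: Z).
  by apply: mulr_ge0; [apply: divr_ge0; [exact: ltW|] | exact: sqn_ge0].
rewrite sqnD sqnZ mxinnerZr (mxinnerC r0) in h.
have e : mu P / 2 * (sqn r0 + 2 * ((mu P)^-1 * mxinner Z r0) + (mu P)^-1 ^+ 2 * sqn Z)
   = mxinner Z r0 + mu P / 2 * sqn r0 + sqn Z / (2 * mu P).
  by field; rewrite gt_eqF.
rewrite e in h; lra.
Qed.

Lemma LB (T : st) :
  2^-1 * sqn (Uv T - Om T *m X) + lam2 P / 2 * sqn (Om T) + del1 P / 2 * sqn (Qv T)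
  + del2 P / 2 * sqn (Wv T) + rho1 P / 2 * sqn (E1 T) + rho2 P / 2 * sqn (E2 T) <= Bd T.
Proof.
rewrite /Bd Lag_sq.
have h1 := inner_lb (Z1 T) (r1 H T).
have h2 := inner_lb (Z2 T) (r2 Y T).
have h3 : 0 <= lam1 P * l1norm (Uv T) by apply: mulr_ge0; [exact: ltW lam1_gt0| exact: l1norm_ge0].
have e : (sqn (Z1 T) + sqn (Z2 T)) / (2 * mu P) = sqn (Z1 T) / (2 * mu P) + sqn (Z2 T) / (2 * mu P).
  by rewrite mulrDl.
rewrite e; lra.
Qed.

Lemma Bd_ge0 (T : st) : 0 <= Bd T.
Proof.
apply: le_trans (LB T).
have := sqn_ge0 (Uv T - Om T *m X); have := sqn_ge0 (Om T); have := sqn_ge0 (Qv T).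
have := sqn_ge0 (Wv T); have := sqn_ge0 (E1 T); have := sqn_ge0 (E2 T).
have := lam2_gt0; have := del1_gt0; have := del2_gt0; have := rho1_gt0; have := rho2_gt0.
nra.
Qed.

Lemma bound_help (x k B : R) : 0 <= x -> 0 < k -> k / 2 * x <= B -> 4 * k^-1 <= c0 -> x <= c0 * B.
Proof.
move=> x0 k0 h hc.
have B0 : 0 <= B by apply: le_trans h; apply: mulr_ge0 => //; apply: divr_ge0 => //; exact: ltW.
have : x <= 2 * k^-1 * B.
  have e : x = 2 * k^-1 * (k / 2 * x) by field; rewrite gt_eqF.
  rewrite [X in X <= _]e; apply: ler_wpM2l => //; apply: mulr_ge0 => //; rewrite invr_ge0; exact: ltW.
move=> h2; apply: le_trans h2 _; apply: ler_wpM2r => //.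
have : 0 <= k^-1 by rewrite invr_ge0; exact: ltW.
lra.
Qed.

Definition Ssum := 1 + (lam2 P)^-1 + (del1 P)^-1 + (del2 P)^-1 + (rho1 P)^-1 + (rho2 P)^-1.

Lemma inv_ge0s : [/\ 0 <= (lam2 P)^-1, 0 <= (del1 P)^-1, 0 <= (del2 P)^-1, 0 <= (rho1 P)^-1 & 0 <= (rho2 P)^-1].
Proof.
split; rewrite invr_ge0 ltW //; [exact: lam2_gt0|exact: del1_gt0|exact: del2_gt0|exact: rho1_gt0|exact: rho2_gt0].
Qed.

Lemma c0_ge (x : R) : 0 <= x -> x <= Ssum -> 4 * x <= c0.
Proof.
move=> x0 hx; rewrite /c0 -/Ssum.
have sx := sqn_ge0 X.
nra.
Qed.

Lemma Ssum_ge k : k \in [:: lam2 P; del1 P; del2 P; rho1 P; rho2 P] -> k^-1 <= Ssum.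
Proof.
have [i1 i2 i3 i4 i5] := inv_ge0s.
rewrite /Ssum !inE => /orP [/eqP ->|/orP [/eqP ->|/orP [/eqP ->|/orP [/eqP ->| /eqP ->]]]]; lra.
Qed.

Lemma c0_gek k : 0 < k -> k \in [:: lam2 P; del1 P; del2 P; rho1 P; rho2 P] -> 4 * k^-1 <= c0.
Proof. move=> k0 hk; apply: c0_ge; [rewrite invr_ge0; exact: ltW| exact: Ssum_ge]. Qed.

Lemma halfk_le (x k B : R) : 0 < k -> k / 2 * x <= B -> x <= 2 * k^-1 * B.
Proof.
move=> k0 h.
have e : x = 2 * k^-1 * (k / 2 * x) by field; rewrite gt_eqF.
rewrite [X in X <= _]e; apply: ler_wpM2l => //; apply: mulr_ge0 => //; rewrite invr_ge0; exact: ltW.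
Qed.

Lemma comps_bound (T : st) :
  sqn (Om T) <= c0 * Bd T /\ sqn (Uv T) <= c0 * Bd T /\ sqn (Qv T) <= c0 * Bd T /\
      sqn (Wv T) <= c0 * Bd T /\ sqn (E1 T) <= c0 * Bd T /\ sqn (E2 T) <= c0 * Bd T.
Proof.
have h := LB T.
have := sqn_ge0 (Uv T - Om T *m X); have := sqn_ge0 (Om T); have := sqn_ge0 (Qv T).
have := sqn_ge0 (Wv T); have := sqn_ge0 (E1 T); have := sqn_ge0 (E2 T).
have := lam2_gt0; have := del1_gt0; have := del2_gt0; have := rho1_gt0; have := rho2_gt0.
move=> r2p r1p d2p d1p l2p e2p e1p wp qp op up.
have hk (k x : R) : 0 < k -> 0 <= x -> 0 <= k / 2 * x.
  by move=> k0 x0; apply: mulr_ge0 => //; apply: divr_ge0 => //; exact: ltW.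
have a0 : 0 <= 2^-1 * sqn (Uv T - Om T *m X) by apply: mulr_ge0.
have aO := hk _ _ l2p op; have aQ := hk _ _ d1p qp; have aW := hk _ _ d2p wp.
have aE1 := hk _ _ r1p e1p; have aE2 := hk _ _ r2p e2p.
have hO : sqn (Om T) <= c0 * Bd T.
  by apply: bound_help l2p _ (c0_gek l2p _) => //; [lra | rewrite !inE eqxx].
have hQ : sqn (Qv T) <= c0 * Bd T.
  by apply: bound_help d1p _ (c0_gek d1p _) => //; [lra | rewrite !inE eqxx ?orbT].
have hW : sqn (Wv T) <= c0 * Bd T.
  by apply: bound_help d2p _ (c0_gek d2p _) => //; [lra | rewrite !inE eqxx ?orbT].
have hE1 : sqn (E1 T) <= c0 * Bd T.
  by apply: bound_help r1p _ (c0_gek r1p _) => //; [lra | rewrite !inE eqxx ?orbT].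
have hE2 : sqn (E2 T) <= c0 * Bd T.
  by apply: bound_help r2p _ (c0_gek r2p _) => //; [lra | rewrite !inE eqxx ?orbT].
split => //; split => //.
have B0 := Bd_ge0 T.
have hUX : sqn (Uv T - Om T *m X) <= 2 * Bd T by lra.
have hO2 : sqn (Om T) <= 2 * (lam2 P)^-1 * Bd T by apply: halfk_le => //; lra.
have hOX : sqn (Om T *m X) <= sqn (Om T) * sqn X := sqn_mul _ _.
have hU : sqn (Uv T) <= 2 * sqn (Uv T - Om T *m X) + 2 * sqn (Om T *m X).
  by have := sqnD_le (Uv T - Om T *m X) (Om T *m X); rewrite subrK.
have sx := sqn_ge0 X.
have [i1 _ _ _ _] := inv_ge0s.
have hS : (lam2 P)^-1 <= Ssum by apply: Ssum_ge; rewrite !inE eqxx.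
have hS2 : 1 + (lam2 P)^-1 * sqn X <= (1 + sqn X) * Ssum.
  have : 1 + (lam2 P)^-1 <= Ssum by move: hS; rewrite /Ssum; have [? ? ? ? ?] := inv_ge0s; lra.
  nra.
have : sqn (Om T) * sqn X <= 2 * (lam2 P)^-1 * Bd T * sqn X by apply: ler_wpM2r.
have : 4 * (1 + (lam2 P)^-1 * sqn X) * Bd T <= c0 * Bd T.
  apply: ler_wpM2r => //; rewrite /c0 -/Ssum; lra.
nra.
Qed.

End Steps.

Section Steps2.
Variable R : realType.
Variables m n r s c : nat.
Variables (X : 'M[R]_(m, n)) (H : 'M[R]_(s, n)) (Y : 'M[R]_(c, n)) (P : adm_params R).
Hypothesis Ppos : params_pos P.

Local Notation st := (state R m n r s c).
Local Notation Lag := (Lag X H Y P).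
Local Notation Ls := (Ls X H Y P).
Local Notation Kc := (Kc P).

Lemma Kc_ge (Bb : R) : 0 <= Bb ->
  1 + del1 P + mu P * Bb + mu P * Bb ^+ 2 <= Kc Bb /\
  1 + del2 P + mu P * Bb + mu P * Bb ^+ 2 <= Kc Bb.
Proof.
move=> B0; have := del1_gt0 Ppos; have := del2_gt0 Ppos; rewrite /Kc; split; lra.
Qed.

Lemma cU_bound (T : st) Bb D : sqn (Qv T) <= Bb -> sqn (Wv T) <= Bb ->
  cU P T D <= Kc Bb * sqn D.
Proof.
move=> hQ hW; rewrite /cU.
have B0 : 0 <= Bb := le_trans (sqn_ge0 _) hQ.
have mu0 := mu_gt0 Ppos.
have sD := sqn_ge0 D.
have h1 : sqn (Qv T *m D) <= Bb * sqn D.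
  by apply: le_trans (sqn_mul _ _) _; apply: ler_wpM2r.
have h2 : sqn (Wv T *m Qv T *m D) <= Bb ^+ 2 * sqn D.
  apply: le_trans (sqn_mul _ _) _; apply: ler_wpM2r => //.
  apply: le_trans (sqn_mul _ _) _; rewrite expr2; apply: ler_pM => //; exact: sqn_ge0.
have [k1 _] := Kc_ge B0.
have d1 := del1_gt0 Ppos.
have e : 2^-1 * sqn D + mu P / 2 * sqn (Qv T *m D) + mu P / 2 * sqn (Wv T *m Qv T *m D)
  = 2^-1 * (sqn D + mu P * sqn (Qv T *m D) + mu P * sqn (Wv T *m Qv T *m D)) by field.
rewrite e.
have h1' : mu P * sqn (Qv T *m D) <= mu P * (Bb * sqn D) by apply: ler_wpM2l => //; exact: ltW.
have h2' : mu P * sqn (Wv T *m Qv T *m D) <= mu P * (Bb ^+ 2 * sqn D) by apply: ler_wpM2l => //; exact: ltW.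
have hK : (1 + mu P * Bb + mu P * Bb ^+ 2) * sqn D <= Kc Bb * sqn D.
  apply: ler_wpM2r => //; lra.
have e2 : (1 + mu P * Bb + mu P * Bb ^+ 2) * sqn D = sqn D + mu P * (Bb * sqn D) + mu P * (Bb ^+ 2 * sqn D) by ring.
have : 0 <= sqn (Qv T *m D) := sqn_ge0 _.
have : 0 <= sqn (Wv T *m Qv T *m D) := sqn_ge0 _.
have : 0 <= mu P * sqn (Qv T *m D) by apply: mulr_ge0 => //; [exact: ltW|exact: sqn_ge0].
have : 0 <= mu P * sqn (Wv T *m Qv T *m D) by apply: mulr_ge0 => //; [exact: ltW|exact: sqn_ge0].
lra.
Qed.

Lemma cQ_bound (T : st) Bb D : sqn (Uv T) <= Bb -> sqn (Wv T) <= Bb ->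
  cQ P T D <= Kc Bb * sqn D.
Proof.
move=> hU hW; rewrite /cQ.
have B0 : 0 <= Bb := le_trans (sqn_ge0 _) hU.
have mu0 := mu_gt0 Ppos.
have sD := sqn_ge0 D.
have h1 : sqn (D *m Uv T) <= Bb * sqn D.
  by apply: le_trans (sqn_mul _ _) _; rewrite mulrC; apply: ler_wpM2r.
have h2 : sqn (Wv T *m D *m Uv T) <= Bb ^+ 2 * sqn D.
  apply: le_trans (sqn_mul _ _) _.
  have h := ler_pM (sqn_ge0 _) (sqn_ge0 _) (sqn_mul (Wv T) D) hU.
  apply: le_trans h _.
  have h3 : sqn (Wv T) * sqn D * Bb <= Bb * sqn D * Bb by apply: ler_wpM2r => //; apply: ler_wpM2r.
  by apply: le_trans h3 _; rewrite le_eqVlt; apply/orP; left; apply/eqP; ring.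
have [k1 _] := Kc_ge B0.
have d1 := del1_gt0 Ppos.
have h1' : mu P * sqn (D *m Uv T) <= mu P * (Bb * sqn D) by apply: ler_wpM2l => //; exact: ltW.
have h2' : mu P * sqn (Wv T *m D *m Uv T) <= mu P * (Bb ^+ 2 * sqn D) by apply: ler_wpM2l => //; exact: ltW.
have : (1 + del1 P + mu P * Bb + mu P * Bb ^+ 2) * sqn D <= Kc Bb * sqn D.
  by apply: ler_wpM2r.
have : 0 <= sqn (D *m Uv T) := sqn_ge0 _.
have : 0 <= sqn (Wv T *m D *m Uv T) := sqn_ge0 _.
nra.
Qed.

Lemma cW_bound (T : st) Bb D : sqn (Qv T) <= Bb -> sqn (Uv T) <= Bb ->
  cW P T D <= Kc Bb * sqn D.
Proof.
move=> hQ hU; rewrite /cW.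
have B0 : 0 <= Bb := le_trans (sqn_ge0 _) hU.
have mu0 := mu_gt0 Ppos.
have sD := sqn_ge0 D.
have h2 : sqn (D *m Qv T *m Uv T) <= Bb ^+ 2 * sqn D.
  apply: le_trans (sqn_mul _ _) _.
  have h := ler_pM (sqn_ge0 _) (sqn_ge0 _) (sqn_mul D (Qv T)) hU.
  apply: le_trans h _.
  have h3 : sqn D * sqn (Qv T) * Bb <= sqn D * Bb * Bb by apply: ler_wpM2r => //; apply: ler_wpM2l.
  by apply: le_trans h3 _; rewrite le_eqVlt; apply/orP; left; apply/eqP; ring.
have [_ k1] := Kc_ge B0.
have d1 := del2_gt0 Ppos.
have h2' : mu P * sqn (D *m Qv T *m Uv T) <= mu P * (Bb ^+ 2 * sqn D) by apply: ler_wpM2l => //; exact: ltW.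
have : (1 + del2 P + mu P * Bb + mu P * Bb ^+ 2) * sqn D <= Kc Bb * sqn D.
  by apply: ler_wpM2r.
have : 0 <= sqn (D *m Qv T *m Uv T) := sqn_ge0 _.
have : 0 <= mu P * Bb * sqn D by apply: mulr_ge0 => //; apply: mulr_ge0 => //; exact: ltW.
nra.
Qed.

End Steps2.

Section Steps3.
Variable R : realType.
Variables m n r s c : nat.
Variables (X : 'M[R]_(m, n)) (H : 'M[R]_(s, n)) (Y : 'M[R]_(c, n)) (P : adm_params R).
Hypothesis Ppos : params_pos P.

Local Notation st := (state R m n r s c).
Local Notation Lag := (Lag X H Y P).
Local Notation Ls := (Ls X H Y P).
Local Notation Kc := (Kc P).

Lemma addsubK a b (A B : 'M[R]_(a, b)) : A + (B - A) = B.
Proof. by rewrite addrC subrK. Qed.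

Lemma stepU (T : st) U1 G' (A Bb : R) : 0 < A ->
  is_grad (fun V => Ls (with_U T V)) (Uv T) G' ->
  U1 = soft (lam1 P / A) (Uv T - A^-1 *: G') ->
  sqn (Qv T) <= Bb -> sqn (Wv T) <= Bb ->
  Lag (with_U T U1) + (A - Kc Bb) * sqn (U1 - Uv T) <= Lag T /\
  exists S, l1sub U1 S /\ GU X H Y P T + A *: (U1 - Uv T) = - (lam1 P *: S).
Proof.
move=> A0 hg hU1 hQ hW.
have eG := QE_grad_eq (QE_LsU X H Y P T) hg; subst G'.
have l0 := lam1_gt0 Ppos.
have [S [hS hGS]] := soft_mx (Uv T) (GU X H Y P T) A0 l0.
rewrite -hU1 in hS hGS.
split; last by exists S.
set D := U1 - Uv T.
have q := QE_step D (QE_LsU X H Y P T).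
rewrite addsubK in q.
have sg := l1sub_subgrad hS (Uv T).
have hc := cU_bound Ppos D hQ hW.
have eL1 : Lag (with_U T U1) = Ls (with_U T U1) + lam1 P * l1norm U1 by rewrite /Ls; ring.
have eL0 : Lag T = Ls (with_U T (Uv T)) + lam1 P * l1norm (Uv T) by rewrite /Ls; case: (T) => * /=; ring.
have e3 : lam1 P * mxinner S (Uv T - U1) = mxinner (GU X H Y P T) D + A * sqn D.
  have -> : Uv T - U1 = - D by rewrite /D opprB.
  rewrite mxinnerNr mulrN -mxinnerZl -mxinnerNl -hGS.
  by rewrite mxinnerDl mxinnerZl sqnE.
have sg' : lam1 P * (l1norm U1 + mxinner S (Uv T - U1)) <= lam1 P * l1norm (Uv T).
  by apply: ler_wpM2l => //; exact: ltW.
rewrite mulrDr e3 in sg'.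
rewrite eL1 eL0 q; lra.
Qed.

Lemma stepQ (T : st) Q1 G' (A Bb : R) : 0 < A ->
  is_grad (fun V => Lag (with_Q T V)) (Qv T) G' ->
  Q1 = Qv T - A^-1 *: G' ->
  sqn (Uv T) <= Bb -> sqn (Wv T) <= Bb ->
  Lag (with_Q T Q1) + (A - Kc Bb) * sqn (Q1 - Qv T) <= Lag T /\
  GQ H Y P T = - (A *: (Q1 - Qv T)).
Proof.
move=> A0 hg hQ1 hU hW.
have eG := QE_grad_eq (QE_LagQ X H Y P T) hg; subst G'.
have eGQ : GQ H Y P T = - (A *: (Q1 - Qv T)).
  by rewrite hQ1 addrC addKr scalerN opprK scalerA divff ?gt_eqF // scale1r.
split => //.
set D := Q1 - Qv T.
have q := QE_step D (QE_LagQ X H Y P T).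
rewrite addsubK in q.
have hc := cQ_bound Ppos D hU hW.
have eL0 : Lag T = Lag (with_Q T (Qv T)) by case: (T).
rewrite eL0 q eGQ mxinnerNl mxinnerZl -sqnE; lra.
Qed.

Lemma stepW (T : st) W1 G' (A Bb : R) : 0 < A ->
  is_grad (fun V => Lag (with_W T V)) (Wv T) G' ->
  W1 = Wv T - A^-1 *: G' ->
  sqn (Qv T) <= Bb -> sqn (Uv T) <= Bb ->
  Lag (with_W T W1) + (A - Kc Bb) * sqn (W1 - Wv T) <= Lag T /\
  GW Y P T = - (A *: (W1 - Wv T)).
Proof.
move=> A0 hg hW1 hQ hU.
have eG := QE_grad_eq (QE_LagW X H Y P T) hg; subst G'.
have eGW : GW Y P T = - (A *: (W1 - Wv T)).
  by rewrite hW1 addrC addKr scalerN opprK scalerA divff ?gt_eqF // scale1r.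
split => //.
set D := W1 - Wv T.
have q := QE_step D (QE_LagW X H Y P T).
rewrite addsubK in q.
have hc := cW_bound Ppos D hQ hU.
have eL0 : Lag T = Lag (with_W T (Wv T)) by case: (T).
rewrite eL0 q eGW mxinnerNl mxinnerZl -sqnE; lra.
Qed.

Lemma stepOm (T : st) Om1 :
  is_argmin (fun V => Lag (with_Om T V)) Om1 ->
  Lag (with_Om T Om1) + lam2 P / 2 * sqn (Om1 - Om T) <= Lag T /\
  GOm X P (with_Om T Om1) = 0.
Proof.
move=> ha.
set T' := with_Om T Om1.
have q0 := QE_LagOm X H Y P T'.
have eG : GOm X P T' = 0 by apply: (QE_argmin q0); exact: ha.
split => //.
set D := Om T - Om1.
have q := QE_step D q0.
have e1 : Lag (with_Om T' (Om T' + D)) = Lag T by rewrite /D /= addsubK /T'; case: (T).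
have e2 : Lag (with_Om T' (Om T')) = Lag T' by [].
rewrite e1 e2 eG mxinner0l addr0 in q.
rewrite q /cOm.
have -> : sqn (Om1 - Om T) = sqn D by rewrite /D -opprB sqnN.
have : 0 <= 2^-1 * sqn (D *m X) by apply: mulr_ge0; [|exact: sqn_ge0].
lra.
Qed.

Lemma stepE1 (T : st) E :
  is_argmin (fun V => Lag (with_E1 T V)) E ->
  Lag (with_E1 T E) + (rho1 P + mu P) / 2 * sqn (E - E1 T) <= Lag T /\
  GE1 H P (with_E1 T E) = 0.
Proof.
move=> ha.
set T' := with_E1 T E.
have q0 := QE_LagE1 X H Y P T'.
have eG : GE1 H P T' = 0 by apply: (QE_argmin q0); exact: ha.
split => //.
set D := E1 T - E.
have q := QE_step D q0.
have e1 : Lag (with_E1 T' (E1 T' + D)) = Lag T by rewrite /D /= addsubK /T'; case: (T).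
have e2 : Lag (with_E1 T' (E1 T')) = Lag T' by [].
rewrite e1 e2 eG mxinner0l addr0 in q.
rewrite q /cE1.
have -> : sqn (E - E1 T) = sqn D by rewrite /D -opprB sqnN.
lra.
Qed.

Lemma stepE2 (T : st) E :
  is_argmin (fun V => Lag (with_E2 T V)) E ->
  Lag (with_E2 T E) + (rho2 P + mu P) / 2 * sqn (E - E2 T) <= Lag T /\
  GE2 Y P (with_E2 T E) = 0.
Proof.
move=> ha.
set T' := with_E2 T E.
have q0 := QE_LagE2 X H Y P T'.
have eG : GE2 Y P T' = 0 by apply: (QE_argmin q0); exact: ha.
split => //.
set D := E2 T - E.
have q := QE_step D q0.
have e1 : Lag (with_E2 T' (E2 T' + D)) = Lag T by rewrite /D /= addsubK /T'; case: (T).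
have e2 : Lag (with_E2 T' (E2 T')) = Lag T' by [].
rewrite e1 e2 eG mxinner0l addr0 in q.
rewrite q /cE2.
have -> : sqn (E - E2 T) = sqn D by rewrite /D -opprB sqnN.
lra.
Qed.

End Steps3.

Section Steps4.
Variable R : realType.
Variables m n r s c : nat.
Variables (X : 'M[R]_(m, n)) (H : 'M[R]_(s, n)) (Y : 'M[R]_(c, n)) (P : adm_params R).
Hypothesis Ppos : params_pos P.

Local Notation st := (state R m n r s c).
Local Notation Lag := (Lag X H Y P).
Local Notation Ls := (Ls X H Y P).
Local Notation Kc := (Kc P).

Lemma c0_ge0 : 0 <= c0 X P.
Proof.
have [i1 i2 i3 i4 i5] := inv_ge0s Ppos.
rewrite /c0; apply: mulr_ge0; [apply: mulr_ge0 => //; have := sqn_ge0 X; lra| lra].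
Qed.

Lemma comps_le (T : st) B Mz :
  Lag T <= B -> sqn (Z1 T) <= Mz -> sqn (Z2 T) <= Mz ->
  let Bb := c0 X P * (B + Mz / mu P) in
  sqn (Om T) <= Bb /\ sqn (Uv T) <= Bb /\ sqn (Qv T) <= Bb /\
  sqn (Wv T) <= Bb /\ sqn (E1 T) <= Bb /\ sqn (E2 T) <= Bb.
Proof.
move=> hL h1 h2 Bb.
have hB : Bd X H Y P T <= B + Mz / mu P.
  rewrite /Bd.
  have mu0 := mu_gt0 Ppos.
  have : (sqn (Z1 T) + sqn (Z2 T)) / (2 * mu P) <= Mz / mu P.
    rewrite ler_pdivrMr ?mulr_gt0 //.
    have -> : Mz / mu P * (2 * mu P) = 2 * Mz by field; rewrite gt_eqF.
    lra.
  lra.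
have hc : c0 X P * Bd X H Y P T <= Bb by apply: ler_wpM2l => //; exact: c0_ge0.
have [a1 [a2 [a3 [a4 [a5 a6]]]]] := comps_bound X H Y Ppos T.
by do ![split; first exact: le_trans hc] ; exact: le_trans hc.
Qed.

Lemma le_dec (L1 L0 A K x : R) : L1 + (A - K) * x <= L0 -> K + 1 <= A -> 0 <= x -> L1 + x <= L0.
Proof. move=> h hA hx; nra. Qed.

Lemma step_full (Tk Tk1 : st) etaU etaQ etaW B Mz :
  adm_step X H Y P etaU etaQ etaW Tk Tk1 ->
  Lag Tk <= B -> sqn (Z1 Tk) <= Mz -> sqn (Z2 Tk) <= Mz ->
  Kc (c0 X P * (B + Mz / mu P)) + 1 <= mu P * etaU ->
  Kc (c0 X P * (B + Mz / mu P)) + 1 <= mu P * etaQ ->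
  Kc (c0 X P * (B + Mz / mu P)) + 1 <= mu P * etaW ->
  [/\ Lag Tk1 + (sqn (Uv Tk1 - Uv Tk) + sqn (Qv Tk1 - Qv Tk) + sqn (Wv Tk1 - Wv Tk)
       + lam2 P / 2 * sqn (Om Tk1 - Om Tk) + (rho1 P + mu P) / 2 * sqn (E1 Tk1 - E1 Tk)
       + (rho2 P + mu P) / 2 * sqn (E2 Tk1 - E2 Tk))
       <= Lag Tk + (sqn (Z1 Tk1 - Z1 Tk) + sqn (Z2 Tk1 - Z2 Tk)) / mu P,
     Z1 Tk1 = rho1 P *: E1 Tk1 /\ Z2 Tk1 = rho2 P *: E2 Tk1,
     Z1 Tk1 - Z1 Tk = mu P *: r1 H Tk1 /\ Z2 Tk1 - Z2 Tk = mu P *: r2 Y Tk1,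
     sqn (E1 Tk1) <= c0 X P * (B + Mz / mu P) /\ sqn (E2 Tk1) <= c0 X P * (B + Mz / mu P) &
     [/\ GOm X P Tk1 = 0,
         GQ H Y P (with_U Tk (Uv Tk1)) = - ((mu P * etaQ) *: (Qv Tk1 - Qv Tk)),
         GW Y P (with_Q (with_U Tk (Uv Tk1)) (Qv Tk1)) = - ((mu P * etaW) *: (Wv Tk1 - Wv Tk)) &
         exists S, l1sub (Uv Tk1) S /\
           GU X H Y P Tk + (mu P * etaU) *: (Uv Tk1 - Uv Tk) = - (lam1 P *: S)]].
Proof.
case: Tk1 => Om1 U1 Q1 W1 E11 E21 Z11 Z21.
rewrite /adm_step.
move=> [[GU' [hgU hU1]] [[GQ' [hgQ hQ1]] [[GW' [hgW hW1]] [hOm [hE1 [hE2 [hZ1 hZ2]]]]]]].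
move=> hL hz1 hz2 hKU hKQ hKW.
rewrite /= in hU1 hQ1 hW1 hZ1 hZ2.
set Bb := c0 X P * (B + Mz / mu P).
have mu0 := mu_gt0 Ppos.
have [bO [bU [bQ [bW [bE1 bE2]]]]] := comps_le hL hz1 hz2.
have B0 : 0 <= Bb := le_trans (sqn_ge0 _) bO.
have K1 : 1 <= Kc Bb.
  rewrite /Kc; have d1 := del1_gt0 Ppos; have d2 := del2_gt0 Ppos.
  have : 0 <= mu P * Bb by apply: mulr_ge0 => //; exact: ltW.
  have : 0 <= mu P * Bb ^+ 2 by apply: mulr_ge0 => //; [exact: ltW| exact: sqr_ge0].
  lra.
have AU0 : 0 < mu P * etaU by lra.
have AQ0 : 0 < mu P * etaQ by lra.
have AW0 : 0 < mu P * etaW by lra.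
set T1 := with_U Tk U1.
have [dU [S [hS hGS]]] := stepU (T := Tk) Ppos AU0 hgU hU1 bQ bW.
have dU' := le_dec dU hKU (sqn_ge0 _).
have hL1 : Lag T1 <= B by have := sqn_ge0 (U1 - Uv Tk); lra.
have [_ [bU1 [_ [bW1 _]]]] := comps_le (T := T1) hL1 hz1 hz2.
set T2 := with_Q T1 Q1.
have [dQ gQ] := stepQ (T := T1) Ppos AQ0 hgQ hQ1 bU1 bW1.
have dQ' := le_dec dQ hKQ (sqn_ge0 _).
have hL2 : Lag T2 <= B by have := sqn_ge0 (Q1 - Qv T1); lra.
have [_ [bU2 [bQ2 _]]] := comps_le (T := T2) hL2 hz1 hz2.
set T3 := with_W T2 W1.
have [dW gW] := stepW (T := T2) Ppos AW0 hgW hW1 bQ2 bU2.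
have dW' := le_dec dW hKW (sqn_ge0 _).
set T4 := with_Om T3 Om1.
have [dOm gOm] := stepOm (T := T3) hOm.
set T5 := with_E1 T4 E11.
have [dE1 gE1] := stepE1 (T := T4) hE1.
set T6 := with_E2 T5 E21.
have [dE2 gE2] := stepE2 (T := T5) hE2.
set Tn := State Om1 U1 Q1 W1 E11 E21 Z11 Z21.
have eZ1 : Z11 - Z1 Tk = mu P *: r1 H Tn by rewrite hZ1 addrC addKr.
have eZ2 : Z21 - Z2 Tk = mu P *: r2 Y Tn by rewrite hZ2 addrC addKr.
have eL : Lag Tn = Lag T6 + mxinner (Z11 - Z1 Tk) (r1 H Tn) + mxinner (Z21 - Z2 Tk) (r2 Y Tn).
  by rewrite !Lag_sq /= !mxinnerBl; ring.
have iZ a b (Z r0 : 'M[R]_(a, b)) : Z = mu P *: r0 -> mxinner Z r0 = sqn Z / mu P.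
  by move=> ->; rewrite sqnZ mxinnerZl sqnE; field; rewrite gt_eqF.
rewrite (iZ _ _ _ _ eZ1) (iZ _ _ _ _ eZ2) in eL.
have hL6 : Lag T6 <= B.
  have := sqn_ge0 (Om1 - Om T3); have := sqn_ge0 (E11 - E1 T4); have := sqn_ge0 (E21 - E2 T5).
  have := lam2_gt0 Ppos; have := rho1_gt0 Ppos; have := rho2_gt0 Ppos.
  have := sqn_ge0 (W1 - Wv T2); have := sqn_ge0 (Q1 - Qv T1); have := sqn_ge0 (U1 - Uv Tk).
  nra.
have [_ [_ [_ [_ [bE16 bE26]]]]] := comps_le (T := T6) hL6 hz1 hz2.
split.
- rewrite eL /= mulrDl.
  move: dU' dQ' dW' dOm dE1 dE2; rewrite /=; lra.
- split.
    move: gE1; rewrite /GE1 /= => /eqP; rewrite subr_eq0 => /eqP ->.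
    by rewrite hZ1 addrC.
  move: gE2; rewrite /GE2 /= => /eqP; rewrite subr_eq0 => /eqP ->.
  by rewrite hZ2 addrC.
- by [].
- by [].
- split => //; by exists S.
Qed.

End Steps4.

Import numFieldNormedType.Exports.
Local Open Scope classical_set_scope.

Section S.
Variable R : realType.
Definition cv (u : nat -> R) (l : R) := u @ \oo --> l.
Lemma cvD u v a b : cv u a -> cv v b -> cv (fun k => u k + v k) (a + b).
Proof. move=> h1 h2; exact: cvgD. Qed.
Lemma cvM u v a b : cv u a -> cv v b -> cv (fun k => u k * v k) (a * b).
Proof. move=> h1 h2; exact: cvgM. Qed.
Lemma cvN u a : cv u a -> cv (fun k => - u k) (- a).
Proof. move=> h1; exact: cvgN. Qed.
Lemma cvC a : cv (fun _ => a) a.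
Proof. exact: cvg_cst. Qed.
Lemma cv_sum p (u : 'I_p -> nat -> R) a : (forall i, cv (u i) (a i)) -> cv (fun k => \sum_i u i k) (\sum_i a i).
Proof.
elim: p u a => [|p ih] u a h.
  have -> : (fun k => \sum_(i < 0) u i k) = (fun _ => 0) by apply/funext => k; rewrite big_ord0.
  by rewrite big_ord0; exact: cvC.
have -> : (fun k => \sum_(i < p.+1) u i k) = (fun k => \sum_(i < p) u (widen_ord (leqnSn p) i) k + u ord_max k).
  by apply/funext => k; rewrite big_ord_recr.
rewrite big_ord_recr /=.
apply: cvD; last exact: h.
exact: (ih (fun i => u (widen_ord (leqnSn p) i)) (fun i => a (widen_ord (leqnSn p) i))).
Qed.
Lemma cv_uniq u a b : cv u a -> cv u b -> a = b.
Proof. move=> h1 h2; exact: (cvg_unique _ h1 h2). Qed.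
Lemma cv_epsP u a : cv u a <-> forall e, 0 < e -> exists K, forall k, (K <= k)%N -> `|u k - a| < e.
Proof.
split.
- move=> /cvgrPdist_lt h e e0; have := h e e0; case => K /= _ hK; exists K => k kK.
  by rewrite distrC; apply: hK.
- move=> h; apply/cvgrPdist_lt => e e0; have [K hK] := h e e0; exists K => // k /= kK.
  by rewrite distrC; apply: hK.
Qed.
Lemma cv_le u a C : cv u a -> (forall k, u k <= C) -> a <= C.
Proof.
move=> /cv_epsP h hu; rewrite leNgt; apply/negP => aC.
have [K hK] := h (a - C) (ltac:(by rewrite subr_gt0)).
have := hK K (leqnn K); have := hu K; rewrite ltr_norml; lra.
Qed.
Lemma cv_norm u a : cv u a -> cv (fun k => `|u k|) `|a|.
Proof. exact: cvg_norm. Qed.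
Lemma cv_sub u a (f : nat -> nat) : cv u a -> (forall k, (f k < f k.+1)%N) -> cv (fun k => u (f k)) a.
Proof.
move=> /cv_epsP h hf; apply/cv_epsP => e e0; have [K hK] := h e e0; exists K => k kK.
apply: hK; apply: leq_trans kK _.
have mono : forall j, (j <= f j)%N.
  by elim => // j ih; exact: leq_ltn_trans ih (hf j).
exact: mono.
Qed.

Lemma cvB u v a b : cv u a -> cv v b -> cv (fun k => u k - v k) (a - b).
Proof. by move=> h1 h2; apply: cvD => //; apply: cvN. Qed.

Definition mxcv p q (A_ : nat -> 'M[R]_(p, q)) (A : 'M[R]_(p, q)) :=
  forall i j, cv (fun k => A_ k i j) (A i j).

Lemma mxcvD p q (A_ B_ : nat -> 'M[R]_(p, q)) A B :
  mxcv A_ A -> mxcv B_ B -> mxcv (fun k => A_ k + B_ k) (A + B).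
Proof.
move=> h1 h2 i j; rewrite mxE.
have -> : (fun k => (A_ k + B_ k) i j) = (fun k => A_ k i j + B_ k i j) by apply/funext => k; rewrite mxE.
exact: cvD.
Qed.

Lemma mxcvN p q (A_ : nat -> 'M[R]_(p, q)) A :
  mxcv A_ A -> mxcv (fun k => - A_ k) (- A).
Proof.
move=> h1 i j; rewrite mxE.
have -> : (fun k => (- A_ k) i j) = (fun k => - A_ k i j) by apply/funext => k; rewrite mxE.
exact: cvN.
Qed.

Lemma mxcvB p q (A_ B_ : nat -> 'M[R]_(p, q)) A B :
  mxcv A_ A -> mxcv B_ B -> mxcv (fun k => A_ k - B_ k) (A - B).
Proof. by move=> h1 h2; apply: mxcvD => //; apply: mxcvN. Qed.

Lemma mxcvZ p q (A_ : nat -> 'M[R]_(p, q)) A (x : R) :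
  mxcv A_ A -> mxcv (fun k => x *: A_ k) (x *: A).
Proof.
move=> h1 i j; rewrite mxE.
have -> : (fun k => (x *: A_ k) i j) = (fun k => x * A_ k i j) by apply/funext => k; rewrite mxE.
exact: cvM (cvC (a := x)) (h1 i j).
Qed.

Lemma mxcvC p q (A : 'M[R]_(p, q)) : mxcv (fun _ => A) A.
Proof. by move=> i j; exact: cvC. Qed.

Lemma mxcvT p q (A_ : nat -> 'M[R]_(p, q)) A :
  mxcv A_ A -> mxcv (fun k => (A_ k)^T) A^T.
Proof.
move=> h1 i j; rewrite mxE.
have -> : (fun k => (A_ k)^T i j) = (fun k => A_ k j i) by apply/funext => k; rewrite mxE.
exact: h1.
Qed.

Lemma mxcvM p q o (A_ : nat -> 'M[R]_(p, q)) (B_ : nat -> 'M[R]_(q, o)) A B :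
  mxcv A_ A -> mxcv B_ B -> mxcv (fun k => A_ k *m B_ k) (A *m B).
Proof.
move=> h1 h2 i j; rewrite mxE.
have -> : (fun k => (A_ k *m B_ k) i j) = (fun k => \sum_l A_ k i l * B_ k l j) by apply/funext => k; rewrite mxE.
by apply: cv_sum => l; apply: cvM.
Qed.

Lemma mxcv_uniq p q (A_ : nat -> 'M[R]_(p, q)) A B : mxcv A_ A -> mxcv A_ B -> A = B.
Proof. by move=> h1 h2; apply/matrixP => i j; exact: cv_uniq (h1 i j) (h2 i j). Qed.

Lemma mxcv_sub p q (A_ : nat -> 'M[R]_(p, q)) A (f : nat -> nat) :
  mxcv A_ A -> (forall k, (f k < f k.+1)%N) -> mxcv (fun k => A_ (f k)) A.
Proof. by move=> h hf i j; exact: cv_sub (h i j) hf. Qed.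

Lemma sqn_cv p q (A_ : nat -> 'M[R]_(p, q)) A : mxcv A_ A -> cv (fun k => sqn (A_ k)) (sqn A).
Proof.
move=> h; apply: cv_sum => i; apply: cv_sum => j.
have -> : (fun k => A_ k i j ^+ 2) = (fun k => A_ k i j * A_ k i j) by apply/funext => k; rewrite expr2.
by rewrite expr2; apply: cvM.
Qed.

Lemma entry_le_fnorm p q (A : 'M[R]_(p, q)) i j : `|A i j| <= fnorm A.
Proof. by rewrite -sqrtr_sqr /fnorm ler_wsqrtr // entry_le_sqn. Qed.

Lemma mxcv_of_sqn0 p q (A_ : nat -> 'M[R]_(p, q)) : cv (fun k => sqn (A_ k)) 0 -> mxcv A_ 0.
Proof.
move=> /cv_epsP h i j; apply/cv_epsP => e e0.
have [K hK] := h (e ^+ 2) (exprn_gt0 _ e0); exists K => k kK.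
have := hK k kK; rewrite subr0 ger0_norm ?sqn_ge0 // => h2.
rewrite mxE subr0.
have h3 := entry_le_sqn (A_ k) i j.
rewrite -ltr_sqr ?nnegrE ?normr_ge0 ?(ltW e0) //.
by rewrite real_normK ?num_real //; apply: le_lt_trans h3 h2.
Qed.

Lemma mxcv_shift p q (A_ B_ : nat -> 'M[R]_(p, q)) A :
  mxcv A_ A -> mxcv (fun k => B_ k - A_ k) 0 -> mxcv B_ A.
Proof.
move=> h1 h2.
have := mxcvD h2 h1; rewrite add0r.
by have -> : (fun k => B_ k - A_ k + A_ k) = B_ by apply/funext => k; rewrite subrK.
Qed.

Lemma mxcv_of_fnorm p q (A_ : nat -> 'M[R]_(p, q)) A :
  (forall e, 0 < e -> exists K, forall k, (K <= k)%N -> fnorm (A_ k - A) < e) -> mxcv A_ A.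
Proof.
move=> h i j; apply/cv_epsP => e e0; have [K hK] := h e e0; exists K => k kK.
apply: le_lt_trans (hK k kK).
by have := entry_le_fnorm (A_ k - A) i j; rewrite !mxE.
Qed.

Lemma fnorm_of_mxcv p q (A_ : nat -> 'M[R]_(p, q)) A :
  mxcv A_ A -> forall e, 0 < e -> exists K, forall k, (K <= k)%N -> fnorm (A_ k - A) < e.
Proof.
move=> h e e0.
have h2 := sqn_cv (mxcvB h (mxcvC (A := A))); rewrite subrr sqn0 in h2.
have [K hK] := (iffLR (cv_epsP _ _) h2) (e ^+ 2) (exprn_gt0 _ e0); exists K => k kK.
have := hK k kK; rewrite subr0 ger0_norm ?sqn_ge0 // => h3.
rewrite /fnorm -(ger0_norm (ltW e0)) -sqrtr_sqr ltr_sqrt ?exprn_gt0 // normrX ger0_norm // ltW.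
Qed.

End S.

Section Helpers.
Variable R : realType.

Lemma strict_mono (f : nat -> nat) : (forall k, (f k < f k.+1)%N) -> forall a b, (a < b)%N -> (f a < f b)%N.
Proof.
move=> hf a b; elim: b => // b ih; rewrite ltnS leq_eqVlt => /orP [/eqP -> | h]; first exact: hf.
exact: ltn_trans (ih h) (hf b).
Qed.

Lemma strict_comp (f g : nat -> nat) : (forall k, (f k < f k.+1)%N) -> (forall k, (g k < g k.+1)%N) ->
  forall k, (f (g k) < f (g k.+1))%N.
Proof. by move=> hf hg k; apply: strict_mono hf _ _ (hg k). Qed.

Lemma strict_ge (f : nat -> nat) : (forall k, (f k < f k.+1)%N) -> forall k, (k <= f k)%N.
Proof. by move=> hf; elim => // k ih; exact: leq_ltn_trans ih (hf k). Qed.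

Lemma bw_scalar (u : nat -> R) C : (forall k, `|u k| <= C) ->
  exists g : nat -> nat, (forall k, (g k < g k.+1)%N) /\ exists a, cv (fun k => u (g k)) a.
Proof.
move=> hu.
have hb : bounded_fun u.
  exists C; split; first exact: num_real.
  move=> M hM k _ /=; apply: le_trans (hu k) _; exact: ltW.
have [g hg hc] := bolzano_weierstrass hb.
exists g; split.
  by move/increasing_seqP: hg => h k; have := h k.
by exists (lim ((u \o g) @ \oo)); exact: hc.
Qed.

Lemma mx_bw p q (A_ : nat -> 'M[R]_(p, q)) C : (forall k i j, `|A_ k i j| <= C) ->
  exists f : nat -> nat, (forall k, (f k < f k.+1)%N) /\ exists A, mxcv (fun k => A_ (f k)) A.
Proof.
move=> hA.
have main : forall l : seq ('I_p * 'I_q), exists f : nat -> nat, (forall k, (f k < f k.+1)%N) /\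
    forall x, x \in l -> exists a, cv (fun k => A_ (f k) x.1 x.2) a.
  elim => [|x l [f [hf hl]]].
    by exists id; split.
  have [g [hg [a ha]]] := bw_scalar (u := fun k => A_ (f k) x.1 x.2) (C := C) (fun k => hA _ _ _).
  exists (fun k => f (g k)); split; first exact: strict_comp.
  move=> y; rewrite inE => /orP [/eqP -> | hy]; first by exists a.
  have [b hb] := hl y hy; exists b.
  exact: (cv_sub hb hg).
have [f [hf hl]] := main (enum [set: 'I_p * 'I_q]).
exists f; split => //.
have hch : forall i j, exists a, cv (fun k => A_ (f k) i j) a.
  by move=> i j; apply: (hl (i, j)); rewrite mem_enum in_setT.
exists (\matrix_(i, j) projT1 (cid (hch i j))) => i j; rewrite mxE.
exact: projT2 (cid (hch i j)).
Qed.

Lemma cv_unshift (u : nat -> R) a : cv (fun k => u k.+1) a -> cv u a.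
Proof.
move=> /cv_epsP h; apply/cv_epsP => e e0; have [K hK] := h e e0; exists K.+1 => k kK.
by case: k kK => // k kK; apply: hK.
Qed.

Lemma cv_squeeze0 (u v : nat -> R) : (forall k, 0 <= u k <= v k) -> cv v 0 -> cv u 0.
Proof.
move=> h /cv_epsP hv; apply/cv_epsP => e e0; have [K hK] := hv e e0; exists K => k kK.
have := hK k kK; have := h k; rewrite !subr0 => /andP [h1 h2].
rewrite !ger0_norm //; [exact: le_lt_trans | exact: le_trans h2].
Qed.

Lemma cv_diff0 (u : nat -> R) : (forall k, u k.+1 <= u k) -> (forall k, 0 <= u k) ->
  cv (fun k => u k - u k.+1) 0.
Proof.
move=> hdec hpos.
have ni : nonincreasing_seq u by apply/nonincreasing_seqP.
have lb : has_lbound (range u) by exists 0 => _ [k _ <-]; exact: hpos.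
have hc := nonincreasing_cvgn ni lb.
set l := inf _ in hc.
have hc' : cv u l by exact: hc.
have hc2 : cv (fun k => u k.+1) l.
  move/cv_epsP: hc' => h; apply/cv_epsP => e e0; have [K hK] := h e e0; exists K => k kK.
  by apply: hK; exact: leqW.
by have := cvB hc' hc2; rewrite subrr.
Qed.

End Helpers.

Section StateCv.
Variable R : realType.
Variables m n r s c : nat.
Variables (X : 'M[R]_(m, n)) (H : 'M[R]_(s, n)) (Y : 'M[R]_(c, n)) (P : adm_params R).

Local Notation st := (state R m n r s c).

Definition stcv (T_ : nat -> st) (T : st) :=
  mxcv (fun k => Om (T_ k)) (Om T) /\ mxcv (fun k => Uv (T_ k)) (Uv T) /\
  mxcv (fun k => Qv (T_ k)) (Qv T) /\ mxcv (fun k => Wv (T_ k)) (Wv T) /\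
  mxcv (fun k => E1 (T_ k)) (E1 T) /\ mxcv (fun k => E2 (T_ k)) (E2 T) /\
  mxcv (fun k => Z1 (T_ k)) (Z1 T) /\ mxcv (fun k => Z2 (T_ k)) (Z2 T).

Ltac mxcv_tac :=
  match goal with
  | |- mxcv (fun k => @?a k + @?b k) _ => apply: (mxcvD (A_ := a) (B_ := b)); mxcv_tac
  | |- mxcv (fun k => - @?a k) _ => apply: (mxcvN (A_ := a)); mxcv_tac
  | |- mxcv (fun k => ?x *: @?a k) _ => apply: (mxcvZ (x := x) (A_ := a)); mxcv_tac
  | |- mxcv (fun k => @?a k *m @?b k) _ => apply: (mxcvM (A_ := a) (B_ := b)); mxcv_tac
  | |- mxcv (fun k => (@?a k)^T) _ => apply: (mxcvT (A_ := a)); mxcv_tac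
  | |- _ => first [assumption | exact: mxcvC]
  end.

Lemma GU_cv T_ T : stcv T_ T -> mxcv (fun k => GU X H Y P (T_ k)) (GU X H Y P T).
Proof. case=> [c1 [c2 [c3 [c4 [c5 [c6 [c7 c8]]]]]]]; rewrite /GU /r1 /r2; mxcv_tac. Qed.

Lemma GQ_cv T_ T : stcv T_ T -> mxcv (fun k => GQ H Y P (T_ k)) (GQ H Y P T).
Proof. case=> [c1 [c2 [c3 [c4 [c5 [c6 [c7 c8]]]]]]]; rewrite /GQ /r1 /r2; mxcv_tac. Qed.
Lemma GW_cv T_ T : stcv T_ T -> mxcv (fun k => GW Y P (T_ k)) (GW Y P T).
Proof. case=> [c1 [c2 [c3 [c4 [c5 [c6 [c7 c8]]]]]]]; rewrite /GW /r1 /r2; mxcv_tac. Qed.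
Lemma GOm_cv T_ T : stcv T_ T -> mxcv (fun k => GOm X P (T_ k)) (GOm X P T).
Proof. case=> [c1 [c2 [c3 [c4 [c5 [c6 [c7 c8]]]]]]]; rewrite /GOm; mxcv_tac. Qed.
Lemma r1_cv T_ T : stcv T_ T -> mxcv (fun k => r1 H (T_ k)) (r1 H T).
Proof. case=> [c1 [c2 [c3 [c4 [c5 [c6 [c7 c8]]]]]]]; rewrite /r1; mxcv_tac. Qed.
Lemma r2_cv T_ T : stcv T_ T -> mxcv (fun k => r2 Y (T_ k)) (r2 Y T).
Proof. case=> [c1 [c2 [c3 [c4 [c5 [c6 [c7 c8]]]]]]]; rewrite /r2; mxcv_tac. Qed.


Lemma max_lt8 (a1 a2 a3 a4 a5 a6 a7 a8 e : R) :
  a1 < e -> a2 < e -> a3 < e -> a4 < e -> a5 < e -> a6 < e -> a7 < e -> a8 < e ->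
  Num.max a1 (Num.max a2 (Num.max a3 (Num.max a4 (Num.max a5 (Num.max a6 (Num.max a7 a8)))))) < e.
Proof. by move=> h1 h2 h3 h4 h5 h6 h7 h8; rewrite !gt_max h1 h2 h3 h4 h5 h6 h7 h8. Qed.

Lemma max_ge8 (a1 a2 a3 a4 a5 a6 a7 a8 : R) :
  let M := Num.max a1 (Num.max a2 (Num.max a3 (Num.max a4 (Num.max a5 (Num.max a6 (Num.max a7 a8)))))) in
  a1 <= M /\ a2 <= M /\ a3 <= M /\ a4 <= M /\ a5 <= M /\ a6 <= M /\ a7 <= M /\ a8 <= M.
Proof. by move=> M; rewrite /M !le_max !lexx !orbT. Qed.

Lemma stnorm_lt (T : st) e :
  fnorm (Om T) < e -> fnorm (Uv T) < e -> fnorm (Qv T) < e -> fnorm (Wv T) < e ->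
  fnorm (E1 T) < e -> fnorm (E2 T) < e -> fnorm (Z1 T) < e -> fnorm (Z2 T) < e -> stnorm T < e.
Proof. exact: max_lt8. Qed.

Lemma stdist_lt (T T' : st) e :
  fnorm (Om T - Om T') < e -> fnorm (Uv T - Uv T') < e -> fnorm (Qv T - Qv T') < e -> fnorm (Wv T - Wv T') < e ->
  fnorm (E1 T - E1 T') < e -> fnorm (E2 T - E2 T') < e -> fnorm (Z1 T - Z1 T') < e -> fnorm (Z2 T - Z2 T') < e ->
  stdist T T' < e.
Proof. exact: max_lt8. Qed.

Lemma stdist_ge (T T' : st) :
  let d := stdist T T' in
  fnorm (Om T - Om T') <= d /\ fnorm (Uv T - Uv T') <= d /\ fnorm (Qv T - Qv T') <= d /\ fnorm (Wv T - Wv T') <= d /\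
  fnorm (E1 T - E1 T') <= d /\ fnorm (E2 T - E2 T') <= d /\ fnorm (Z1 T - Z1 T') <= d /\ fnorm (Z2 T - Z2 T') <= d.
Proof. exact: max_ge8. Qed.

Lemma fnorm_sym a b (A B : 'M[R]_(a, b)) : fnorm (A - B) = fnorm (B - A).
Proof. by rewrite /fnorm -/(sqn _) -/(sqn _) -opprB sqnN. Qed.

Lemma stcv_of_stdist (T_ : nat -> st) T :
  (forall e, 0 < e -> exists K, forall k, (K <= k)%N -> stdist (T_ k) T < e) -> stcv T_ T.
Proof.
move=> h.
have g : forall (F : forall k, R) , (forall k, F k <= stdist (T_ k) T) ->
   forall e, 0 < e -> exists K, forall k, (K <= k)%N -> F k < e.
  move=> F hF e e0; have [K hK] := h e e0; exists K => k kK; exact: le_lt_trans (hF k) (hK k kK).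
by split; [|split; [|split; [|split; [|split; [|split; [|split]]]]]]; apply: mxcv_of_fnorm; apply: g => k;
  have := stdist_ge (T_ k) T; move=> [? [? [? [? [? [? [? ?]]]]]]].
Qed.

Lemma stdist_of_stcv (T_ : nat -> st) T : stcv T_ T ->
  forall e, 0 < e -> exists K, forall k, (K <= k)%N -> stdist T (T_ k) < e.
Proof.
case=> [c1 [c2 [c3 [c4 [c5 [c6 [c7 c8]]]]]]] e e0.
have [K1 h1] := fnorm_of_mxcv c1 e0; have [K2 h2] := fnorm_of_mxcv c2 e0.
have [K3 h3] := fnorm_of_mxcv c3 e0; have [K4 h4] := fnorm_of_mxcv c4 e0.
have [K5 h5] := fnorm_of_mxcv c5 e0; have [K6 h6] := fnorm_of_mxcv c6 e0.
have [K7 h7] := fnorm_of_mxcv c7 e0; have [K8 h8] := fnorm_of_mxcv c8 e0.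
exists (K1 + K2 + K3 + K4 + K5 + K6 + K7 + K8)%N => k kK.
apply: stdist_lt; rewrite fnorm_sym; [apply: h1|apply: h2|apply: h3|apply: h4|apply: h5|apply: h6|apply: h7|apply: h8]; lia.
Qed.

End StateCv.

Section Main.
Variable R : realType.
Variables m n r s c : nat.
Variables (X : 'M[R]_(m, n)) (H : 'M[R]_(s, n)) (Y : 'M[R]_(c, n)) (P : adm_params R).
Hypothesis Ppos : params_pos P.
Hypothesis hr1 : rho1 P < mu P.
Hypothesis hr2 : rho2 P < mu P.

Local Notation st := (state R m n r s c).
Local Notation Lag := (Lag X H Y P).
Local Notation mu := (mu P).
Local Notation rho1 := (rho1 P).
Local Notation rho2 := (rho2 P).

Lemma Zbound (T : st) : Z1 T = rho1 *: E1 T -> Z2 T = rho2 *: E2 T ->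
  0 <= Lag T /\ sqn (Z1 T) <= 2 * mu * (rho1 / (mu - rho1)) * Lag T /\
  sqn (Z2 T) <= 2 * mu * (rho2 / (mu - rho2)) * Lag T.
Proof.
move=> e1 e2.
have h := LB X H Y Ppos T; rewrite /Bd e1 e2 !sqnZ in h.
have mu0 := mu_gt0 Ppos; have r10 := rho1_gt0 Ppos; have r20 := rho2_gt0 Ppos.
have := sqn_ge0 (Uv T - Om T *m X); have := sqn_ge0 (Om T); have := sqn_ge0 (Qv T).
have := sqn_ge0 (Wv T); have s1 := sqn_ge0 (E1 T); have s2 := sqn_ge0 (E2 T).
have := lam2_gt0 Ppos; have := del1_gt0 Ppos; have := del2_gt0 Ppos.
move=> d2 d1 l2 sw sq so su.
set a1 := rho1 * (mu - rho1) / (2 * mu).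
set a2 := rho2 * (mu - rho2) / (2 * mu).
have ea : rho1 / 2 * sqn (E1 T) + rho2 / 2 * sqn (E2 T)
   - (rho1 ^+ 2 * sqn (E1 T) + rho2 ^+ 2 * sqn (E2 T)) / (2 * mu)
   = a1 * sqn (E1 T) + a2 * sqn (E2 T).
  by rewrite /a1 /a2; field; rewrite gt_eqF.
have a10 : 0 < a1 by rewrite /a1 !divr_gt0 ?mulr_gt0 ?subr_gt0.
have a20 : 0 < a2 by rewrite /a2 !divr_gt0 ?mulr_gt0 ?subr_gt0.
have t1 : 0 <= a1 * sqn (E1 T) by apply: mulr_ge0 => //; exact: ltW.
have t2 : 0 <= a2 * sqn (E2 T) by apply: mulr_ge0 => //; exact: ltW.
have nn (k x : R) : 0 < k -> 0 <= x -> 0 <= k / 2 * x.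
  by move=> k0 x0; apply: mulr_ge0 => //; apply: divr_ge0 => //; exact: ltW.
have q1 := nn _ _ l2 so; have q2 := nn _ _ d1 sq; have q3 := nn _ _ d2 sw.
have q0 : 0 <= 2^-1 * sqn (Uv T - Om T *m X) by apply: mulr_ge0 => //; rewrite invr_ge0.
have hL : a1 * sqn (E1 T) + a2 * sqn (E2 T) <= Lag T by rewrite -ea; lra.
have z1 : sqn (rho1 *: E1 T) = 2 * mu * (rho1 / (mu - rho1)) * (a1 * sqn (E1 T)).
  by rewrite sqnZ /a1; field; rewrite !gt_eqF ?subr_gt0.
have z2 : sqn (rho2 *: E2 T) = 2 * mu * (rho2 / (mu - rho2)) * (a2 * sqn (E2 T)).
  by rewrite sqnZ /a2; field; rewrite !gt_eqF ?subr_gt0.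
have k10 : 0 <= 2 * mu * (rho1 / (mu - rho1)).
  apply: mulr_ge0; [apply: mulr_ge0; [|exact: ltW] | apply: divr_ge0; [exact: ltW| rewrite subr_ge0; exact: ltW]] => //.
have k20 : 0 <= 2 * mu * (rho2 / (mu - rho2)).
  apply: mulr_ge0; [apply: mulr_ge0; [|exact: ltW] | apply: divr_ge0; [exact: ltW| rewrite subr_ge0; exact: ltW]] => //.
rewrite e1 e2 z1 z2; split; first lra.
split; apply: ler_wpM2l => //; lra.
Qed.

Definition Mz0 (T0 : st) := sqn (Z1 T0) + sqn (Z2 T0).
Definition Bb0 (T0 : st) := c0 X P * (Lag T0 + Mz0 T0 / mu).
Definition B1 (T0 : st) := `|Lag T0| + (2 * (rho1 ^+ 2 + rho2 ^+ 2) * `|Bb0 T0| + 4 * Mz0 T0) / mu.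
Definition Mz1 (T0 : st) := 2 * mu * (rho1 / (mu - rho1) + rho2 / (mu - rho2)) * B1 T0.
Definition Bb1 (T0 : st) := c0 X P * (B1 T0 + Mz1 T0 / mu).
Definition M0 (T0 : st) := sqn (Om T0) + sqn (Uv T0) + sqn (Qv T0) + sqn (Wv T0)
  + sqn (E1 T0) + sqn (E2 T0) + sqn (Z1 T0) + sqn (Z2 T0).
Definition Ball (T0 : st) := M0 T0 + `|Bb1 T0| + `|Mz1 T0|.

Section Seq.
Variable Th : nat -> st.
Variables etaU etaQ etaW : R.
Hypothesis hstep : forall k, adm_step X H Y P etaU etaQ etaW (Th k) (Th k.+1).
Hypothesis hKU0 : Kc P (Bb0 (Th 0)) + 1 <= mu * etaU.
Hypothesis hKQ0 : Kc P (Bb0 (Th 0)) + 1 <= mu * etaQ.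
Hypothesis hKW0 : Kc P (Bb0 (Th 0)) + 1 <= mu * etaW.
Hypothesis hKU1 : Kc P (Bb1 (Th 0)) + 1 <= mu * etaU.
Hypothesis hKQ1 : Kc P (Bb1 (Th 0)) + 1 <= mu * etaQ.
Hypothesis hKW1 : Kc P (Bb1 (Th 0)) + 1 <= mu * etaW.

Definition Inv (j : nat) := Lag (Th j) <= B1 (Th 0) /\ Z1 (Th j) = rho1 *: E1 (Th j) /\ Z2 (Th j) = rho2 *: E2 (Th j).

Lemma sqnB_le a b (A B : 'M[R]_(a, b)) : sqn (A - B) <= 2 * sqn A + 2 * sqn B.
Proof. by have := sqnD_le A (- B); rewrite sqnN. Qed.

Lemma Dnn (T T' : st) : 0 <= sqn (Uv T' - Uv T) + sqn (Qv T' - Qv T) + sqn (Wv T' - Wv T)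
       + lam2 P / 2 * sqn (Om T' - Om T) + (rho1 + mu) / 2 * sqn (E1 T' - E1 T)
       + (rho2 + mu) / 2 * sqn (E2 T' - E2 T).
Proof.
have mu0 := mu_gt0 Ppos; have r10 := rho1_gt0 Ppos; have r20 := rho2_gt0 Ppos; have l2 := lam2_gt0 Ppos.
have nn (k x : R) : 0 < k -> 0 <= x -> 0 <= k / 2 * x.
  by move=> k0 x0; apply: mulr_ge0 => //; apply: divr_ge0 => //; exact: ltW.
have := nn _ _ l2 (sqn_ge0 (Om T' - Om T)).
have := nn _ _ (addr_gt0 r10 mu0) (sqn_ge0 (E1 T' - E1 T)).
have := nn _ _ (addr_gt0 r20 mu0) (sqn_ge0 (E2 T' - E2 T)).
have := sqn_ge0 (Uv T' - Uv T); have := sqn_ge0 (Qv T' - Qv T); have := sqn_ge0 (Wv T' - Wv T).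
lra.
Qed.

Lemma Inv1 : Inv 1.
Proof.
have mu0 := mu_gt0 Ppos.
have hz1 : sqn (Z1 (Th 0)) <= Mz0 (Th 0) by rewrite /Mz0; have := sqn_ge0 (Z2 (Th 0)); lra.
have hz2 : sqn (Z2 (Th 0)) <= Mz0 (Th 0) by rewrite /Mz0; have := sqn_ge0 (Z1 (Th 0)); lra.
have [ha [hb1 hb2] _ [hd1 hd2] _] := step_full Ppos (hstep 0) (lexx _) hz1 hz2 hKU0 hKQ0 hKW0.
split; last by split.
have hD := Dnn (Th 0) (Th 1).
rewrite -/(Bb0 (Th 0)) in hd1 hd2.
have e1 := sqnB_le (Z1 (Th 1)) (Z1 (Th 0)).
have e2 := sqnB_le (Z2 (Th 1)) (Z2 (Th 0)).
have e1' : sqn (Z1 (Th 1)) = rho1 ^+ 2 * sqn (E1 (Th 1)) by rewrite hb1 sqnZ.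
have e2' : sqn (Z2 (Th 1)) = rho2 ^+ 2 * sqn (E2 (Th 1)) by rewrite hb2 sqnZ.
have f1 : rho1 ^+ 2 * sqn (E1 (Th 1)) <= rho1 ^+ 2 * `|Bb0 (Th 0)|.
  by apply: ler_wpM2l; [exact: sqr_ge0| exact: le_trans hd1 (ler_norm _)].
have f2 : rho2 ^+ 2 * sqn (E2 (Th 1)) <= rho2 ^+ 2 * `|Bb0 (Th 0)|.
  by apply: ler_wpM2l; [exact: sqr_ge0| exact: le_trans hd2 (ler_norm _)].
have g : (sqn (Z1 (Th 1) - Z1 (Th 0)) + sqn (Z2 (Th 1) - Z2 (Th 0))) / mu
   <= (2 * (rho1 ^+ 2 + rho2 ^+ 2) * `|Bb0 (Th 0)| + 4 * Mz0 (Th 0)) / mu.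
  rewrite ler_pM2r ?invr_gt0 //; rewrite /Mz0 in hz1 hz2 *; lra.
rewrite /B1; have := ler_norm (Lag (Th 0)); lra.
Qed.

Definition kap1 := (rho1 + mu) / 2 - rho1 ^+ 2 / mu.
Definition kap2 := (rho2 + mu) / 2 - rho2 ^+ 2 / mu.

Lemma kap_gt0 : 0 < kap1 /\ 0 < kap2.
Proof.
have mu0 := mu_gt0 Ppos; have r10 := rho1_gt0 Ppos; have r20 := rho2_gt0 Ppos.
have e1 : kap1 = (mu - rho1) * (mu + 2 * rho1) / (2 * mu) by rewrite /kap1; field; rewrite gt_eqF.
have e2 : kap2 = (mu - rho2) * (mu + 2 * rho2) / (2 * mu) by rewrite /kap2; field; rewrite gt_eqF.
rewrite e1 e2; split; apply: divr_gt0; rewrite ?mulr_gt0 ?subr_gt0 //; lra.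
Qed.

Definition dec (j : nat) := sqn (Uv (Th j.+1) - Uv (Th j)) + sqn (Qv (Th j.+1) - Qv (Th j))
  + sqn (Wv (Th j.+1) - Wv (Th j)) + lam2 P / 2 * sqn (Om (Th j.+1) - Om (Th j))
  + kap1 * sqn (E1 (Th j.+1) - E1 (Th j)) + kap2 * sqn (E2 (Th j.+1) - E2 (Th j)).

Lemma dec_ge0 j : 0 <= dec j.
Proof.
have [k1 k2] := kap_gt0; have l2 := lam2_gt0 Ppos.
have := sqn_ge0 (Uv (Th j.+1) - Uv (Th j)); have := sqn_ge0 (Qv (Th j.+1) - Qv (Th j)).
have := sqn_ge0 (Wv (Th j.+1) - Wv (Th j)); have := sqn_ge0 (Om (Th j.+1) - Om (Th j)).
have := sqn_ge0 (E1 (Th j.+1) - E1 (Th j)); have := sqn_ge0 (E2 (Th j.+1) - E2 (Th j)).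
rewrite /dec; nra.
Qed.


Lemma inv_step k : Inv k.+1 -> Lag (Th k.+2) + dec k.+1 <= Lag (Th k.+1) /\ Inv k.+2.
Proof.
move=> [hL [z1 z2]].
have mu0 := mu_gt0 Ppos.
have [L0 [b1 b2]] := Zbound z1 z2.
have B0 : 0 <= B1 (Th 0) := le_trans L0 hL.
have c1 : 0 <= 2 * mu * (rho1 / (mu - rho1)).
  apply: mulr_ge0; [apply: mulr_ge0; [|exact: ltW] | apply: divr_ge0; [exact: ltW (rho1_gt0 Ppos)| rewrite subr_ge0; exact: ltW]] => //.
have c2 : 0 <= 2 * mu * (rho2 / (mu - rho2)).
  apply: mulr_ge0; [apply: mulr_ge0; [|exact: ltW] | apply: divr_ge0; [exact: ltW (rho2_gt0 Ppos)| rewrite subr_ge0; exact: ltW]] => //.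
have eMz : Mz1 (Th 0) = 2 * mu * (rho1 / (mu - rho1)) * B1 (Th 0) + 2 * mu * (rho2 / (mu - rho2)) * B1 (Th 0).
  by rewrite /Mz1; ring.
have hz1 : sqn (Z1 (Th k.+1)) <= Mz1 (Th 0).
  apply: le_trans b1 _; rewrite eMz.
  have : 2 * mu * (rho1 / (mu - rho1)) * Lag (Th k.+1) <= 2 * mu * (rho1 / (mu - rho1)) * B1 (Th 0) by apply: ler_wpM2l.
  have : 0 <= 2 * mu * (rho2 / (mu - rho2)) * B1 (Th 0) by apply: mulr_ge0.
  lra.
have hz2 : sqn (Z2 (Th k.+1)) <= Mz1 (Th 0).
  apply: le_trans b2 _; rewrite eMz.
  have : 2 * mu * (rho2 / (mu - rho2)) * Lag (Th k.+1) <= 2 * mu * (rho2 / (mu - rho2)) * B1 (Th 0) by apply: ler_wpM2l.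
  have : 0 <= 2 * mu * (rho1 / (mu - rho1)) * B1 (Th 0) by apply: mulr_ge0.
  lra.
have [ha [hb1 hb2] _ _ _] := step_full Ppos (hstep k.+1) hL hz1 hz2 hKU1 hKQ1 hKW1.
have eZ1 : sqn (Z1 (Th k.+2) - Z1 (Th k.+1)) = rho1 ^+ 2 * sqn (E1 (Th k.+2) - E1 (Th k.+1)).
  by rewrite hb1 z1 -scalerBr sqnZ.
have eZ2 : sqn (Z2 (Th k.+2) - Z2 (Th k.+1)) = rho2 ^+ 2 * sqn (E2 (Th k.+2) - E2 (Th k.+1)).
  by rewrite hb2 z2 -scalerBr sqnZ.
rewrite eZ1 eZ2 in ha.
have hdec : Lag (Th k.+2) + dec k.+1 <= Lag (Th k.+1).
  move: ha; rewrite /dec /kap1 /kap2.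
  set a1 := sqn (E1 _ - _); set a2 := sqn (E2 _ - _).
  have -> : (rho1 ^+ 2 * a1 + rho2 ^+ 2 * a2) / mu = rho1 ^+ 2 / mu * a1 + rho2 ^+ 2 / mu * a2.
    by field; rewrite gt_eqF.
  lra.
split => //; split; last by split.
have := dec_ge0 k.+1; lra.
Qed.

Lemma inv_all k : Inv k.+1.
Proof. by elim: k => [|k ih]; [exact: Inv1 | exact: (inv_step ih).2]. Qed.

Lemma dec_all k : Lag (Th k.+2) + dec k.+1 <= Lag (Th k.+1).
Proof. exact: (inv_step (inv_all k)).1. Qed.

End Seq.
End Main.

Section Main2.
Variable R : realType.
Variables m n r s c : nat.
Variables (X : 'M[R]_(m, n)) (H : 'M[R]_(s, n)) (Y : 'M[R]_(c, n)) (P : adm_params R).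
Hypothesis Ppos : params_pos P.
Hypothesis hr1 : rho1 P < mu P.
Hypothesis hr2 : rho2 P < mu P.

Local Notation st := (state R m n r s c).
Local Notation Lag := (Lag X H Y P).
Local Notation mu := (mu P).
Local Notation rho1 := (rho1 P).
Local Notation rho2 := (rho2 P).

Variable Th : nat -> st.
Variables etaU etaQ etaW : R.
Hypothesis hstep : forall k, adm_step X H Y P etaU etaQ etaW (Th k) (Th k.+1).
Hypothesis hKU0 : Kc P (Bb0 X H Y P (Th 0)) + 1 <= mu * etaU.
Hypothesis hKQ0 : Kc P (Bb0 X H Y P (Th 0)) + 1 <= mu * etaQ.
Hypothesis hKW0 : Kc P (Bb0 X H Y P (Th 0)) + 1 <= mu * etaW.
Hypothesis hKU1 : Kc P (Bb1 X H Y P (Th 0)) + 1 <= mu * etaU.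
Hypothesis hKQ1 : Kc P (Bb1 X H Y P (Th 0)) + 1 <= mu * etaQ.
Hypothesis hKW1 : Kc P (Bb1 X H Y P (Th 0)) + 1 <= mu * etaW.

Let inv k := inv_all Ppos hr1 hr2 hstep hKU0 hKQ0 hKW0 hKU1 hKQ1 hKW1 k.
Let decA k := dec_all Ppos hr1 hr2 hstep hKU0 hKQ0 hKW0 hKU1 hKQ1 hKW1 k.

Lemma Zle j : Inv X H Y P Th j.+1 ->
  sqn (Z1 (Th j.+1)) <= Mz1 X H Y P (Th 0) /\ sqn (Z2 (Th j.+1)) <= Mz1 X H Y P (Th 0).
Proof.
move=> [hL [z1 z2]].
have mu0 := mu_gt0 Ppos.
have [L0 [b1 b2]] := Zbound X H Y Ppos hr1 hr2 z1 z2.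
have B0 : 0 <= B1 X H Y P (Th 0) := le_trans L0 hL.
have c1 : 0 <= 2 * mu * (rho1 / (mu - rho1)).
  apply: mulr_ge0; [apply: mulr_ge0; [|exact: ltW] | apply: divr_ge0; [exact: ltW (rho1_gt0 Ppos)| rewrite subr_ge0; exact: ltW]] => //.
have c2 : 0 <= 2 * mu * (rho2 / (mu - rho2)).
  apply: mulr_ge0; [apply: mulr_ge0; [|exact: ltW] | apply: divr_ge0; [exact: ltW (rho2_gt0 Ppos)| rewrite subr_ge0; exact: ltW]] => //.
have eMz : Mz1 X H Y P (Th 0) = 2 * mu * (rho1 / (mu - rho1)) * B1 X H Y P (Th 0) + 2 * mu * (rho2 / (mu - rho2)) * B1 X H Y P (Th 0).
  by rewrite /Mz1; ring.
split.
  apply: le_trans b1 _; rewrite eMz.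
  have : 2 * mu * (rho1 / (mu - rho1)) * Lag (Th j.+1) <= 2 * mu * (rho1 / (mu - rho1)) * B1 X H Y P (Th 0) by apply: ler_wpM2l.
  have : 0 <= 2 * mu * (rho2 / (mu - rho2)) * B1 X H Y P (Th 0) by apply: mulr_ge0.
  lra.
apply: le_trans b2 _; rewrite eMz.
have : 2 * mu * (rho2 / (mu - rho2)) * Lag (Th j.+1) <= 2 * mu * (rho2 / (mu - rho2)) * B1 X H Y P (Th 0) by apply: ler_wpM2l.
have : 0 <= 2 * mu * (rho1 / (mu - rho1)) * B1 X H Y P (Th 0) by apply: mulr_ge0.
lra.
Qed.

Lemma bound_all k : let B := Ball X H Y P (Th 0) in
  sqn (Om (Th k)) <= B /\ sqn (Uv (Th k)) <= B /\ sqn (Qv (Th k)) <= B /\ sqn (Wv (Th k)) <= B /\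
  sqn (E1 (Th k)) <= B /\ sqn (E2 (Th k)) <= B /\ sqn (Z1 (Th k)) <= B /\ sqn (Z2 (Th k)) <= B.
Proof.
move=> B.
have hM0 : 0 <= M0 (Th 0).
  rewrite /M0; have := sqn_ge0 (Om (Th 0)); have := sqn_ge0 (Uv (Th 0)); have := sqn_ge0 (Qv (Th 0));
  have := sqn_ge0 (Wv (Th 0)); have := sqn_ge0 (E1 (Th 0)); have := sqn_ge0 (E2 (Th 0));
  have := sqn_ge0 (Z1 (Th 0)); have := sqn_ge0 (Z2 (Th 0)); lra.
have a1 := normr_ge0 (Bb1 X H Y P (Th 0)); have a2 := normr_ge0 (Mz1 X H Y P (Th 0)).
case: k => [|j].
  rewrite /B /Ball; move: hM0; rewrite /M0.
  have := sqn_ge0 (Om (Th 0)); have := sqn_ge0 (Uv (Th 0)); have := sqn_ge0 (Qv (Th 0));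
  have := sqn_ge0 (Wv (Th 0)); have := sqn_ge0 (E1 (Th 0)); have := sqn_ge0 (E2 (Th 0));
  have := sqn_ge0 (Z1 (Th 0)); have := sqn_ge0 (Z2 (Th 0)).
  move=> *; do ![split; first lra]; lra.
have hI := inv j; have [hz1 hz2] := Zle hI.
have [b1 [b2 [b3 [b4 [b5 b6]]]]] := comps_le Ppos hI.1 hz1 hz2.
rewrite -/(Bb1 X H Y P (Th 0)) in b1 b2 b3 b4 b5 b6.
have h1 := ler_norm (Bb1 X H Y P (Th 0)); have h2 := ler_norm (Mz1 X H Y P (Th 0)).
rewrite /B /Ball; do ![split; first lra]; lra.
Qed.

Lemma step_any j :
  [/\ Z1 (Th j.+1) = rho1 *: E1 (Th j.+1) /\ Z2 (Th j.+1) = rho2 *: E2 (Th j.+1),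
      Z1 (Th j.+1) - Z1 (Th j) = mu *: r1 H (Th j.+1) /\ Z2 (Th j.+1) - Z2 (Th j) = mu *: r2 Y (Th j.+1) &
     [/\ GOm X P (Th j.+1) = 0,
         GQ H Y P (with_U (Th j) (Uv (Th j.+1))) = - ((mu * etaQ) *: (Qv (Th j.+1) - Qv (Th j))),
         GW Y P (with_Q (with_U (Th j) (Uv (Th j.+1))) (Qv (Th j.+1))) = - ((mu * etaW) *: (Wv (Th j.+1) - Wv (Th j))) &
         exists S, l1sub (Uv (Th j.+1)) S /\
           GU X H Y P (Th j) + (mu * etaU) *: (Uv (Th j.+1) - Uv (Th j)) = - (lam1 P *: S)]].
Proof.
case: j => [|j].
  have hz1 : sqn (Z1 (Th 0)) <= Mz0 (Th 0) by rewrite /Mz0; have := sqn_ge0 (Z2 (Th 0)); lra.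
  have hz2 : sqn (Z2 (Th 0)) <= Mz0 (Th 0) by rewrite /Mz0; have := sqn_ge0 (Z1 (Th 0)); lra.
  by have [_ hb hc _ he] := step_full Ppos (hstep 0) (lexx _) hz1 hz2 hKU0 hKQ0 hKW0.
have hI := inv j; have [hz1 hz2] := Zle hI.
by have [_ hb hc _ he] := step_full Ppos (hstep j.+1) hI.1 hz1 hz2 hKU1 hKQ1 hKW1.
Qed.

Lemma Lag_ge0 k : 0 <= Lag (Th k.+1).
Proof. by have [_ [z1 z2]] := inv k; have [] := Zbound X H Y Ppos hr1 hr2 z1 z2. Qed.

Lemma dec_cv : cv (dec P Th) 0.
Proof.
set u := fun k => Lag (Th k.+1).
have hdec : forall k, u k.+1 <= u k.
  by move=> k; have := decA k; have := dec_ge0 Ppos hr1 hr2 Th k.+1; rewrite /u; lra.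
have h1 := cv_diff0 hdec (fun k => Lag_ge0 k).
apply: cv_unshift; apply: cv_squeeze0 h1 => k.
by apply/andP; split; [exact: dec_ge0 | have := decA k; rewrite /u; lra].
Qed.

Lemma dcv a b (f : nat -> 'M[R]_(a, b)) (C : R) : (forall k, sqn (f k) <= C * dec P Th k) -> mxcv f 0.
Proof.
move=> h; apply: mxcv_of_sqn0.
have hc : cv (fun k => C * dec P Th k) 0 by rewrite -(mulr0 C); exact: cvM (cvC (a := C)) dec_cv.
by apply: cv_squeeze0 hc => k; rewrite sqn_ge0 h.
Qed.

Lemma mxcv_unshift a b (f : nat -> 'M[R]_(a, b)) A : mxcv (fun k => f k.+1) A -> mxcv f A.
Proof. by move=> h i j; apply: cv_unshift; exact: h. Qed.

Lemma dec_parts k :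
  let d := dec P Th k in
  sqn (Uv (Th k.+1) - Uv (Th k)) <= 1 * d /\ sqn (Qv (Th k.+1) - Qv (Th k)) <= 1 * d /\
  sqn (Wv (Th k.+1) - Wv (Th k)) <= 1 * d /\ sqn (Om (Th k.+1) - Om (Th k)) <= (2 / lam2 P) * d /\
  sqn (E1 (Th k.+1) - E1 (Th k)) <= (kap1 P)^-1 * d /\ sqn (E2 (Th k.+1) - E2 (Th k)) <= (kap2 P)^-1 * d.
Proof.
move=> d.
have [k1 k2] := kap_gt0 Ppos hr1 hr2; have l2 := lam2_gt0 Ppos.
have t1 := sqn_ge0 (Uv (Th k.+1) - Uv (Th k)); have t2 := sqn_ge0 (Qv (Th k.+1) - Qv (Th k)).
have t3 := sqn_ge0 (Wv (Th k.+1) - Wv (Th k)); have t4 := sqn_ge0 (Om (Th k.+1) - Om (Th k)).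
have t5 := sqn_ge0 (E1 (Th k.+1) - E1 (Th k)); have t6 := sqn_ge0 (E2 (Th k.+1) - E2 (Th k)).
have n4 : 0 <= lam2 P / 2 * sqn (Om (Th k.+1) - Om (Th k)) by apply: mulr_ge0 => //; apply: divr_ge0 => //; exact: ltW.
have n5 : 0 <= kap1 P * sqn (E1 (Th k.+1) - E1 (Th k)) by apply: mulr_ge0 => //; exact: ltW.
have n6 : 0 <= kap2 P * sqn (E2 (Th k.+1) - E2 (Th k)) by apply: mulr_ge0 => //; exact: ltW.
have hd : d = sqn (Uv (Th k.+1) - Uv (Th k)) + sqn (Qv (Th k.+1) - Qv (Th k))
  + sqn (Wv (Th k.+1) - Wv (Th k)) + lam2 P / 2 * sqn (Om (Th k.+1) - Om (Th k))
  + kap1 P * sqn (E1 (Th k.+1) - E1 (Th k)) + kap2 P * sqn (E2 (Th k.+1) - E2 (Th k)) by [].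
have g (x kk : R) : 0 < kk -> kk * x <= d -> x <= kk^-1 * d.
  move=> kk0 hx; rewrite -(ler_pM2l kk0) mulrA divff ?gt_eqF // mul1r.
  exact: hx.
split; first lra. split; first lra. split; first lra.
split.
  have -> : 2 / lam2 P = (lam2 P / 2)^-1 by rewrite invf_div.
  by apply: g; [apply: divr_gt0 | lra].
split; apply: g => //; lra.
Qed.

Lemma dUcv : mxcv (fun k => Uv (Th k.+1) - Uv (Th k)) 0.
Proof. by apply: (dcv (C := 1)) => k; have [h _] := dec_parts k. Qed.
Lemma dQcv : mxcv (fun k => Qv (Th k.+1) - Qv (Th k)) 0.
Proof. by apply: (dcv (C := 1)) => k; have [_ [h _]] := dec_parts k. Qed.
Lemma dWcv : mxcv (fun k => Wv (Th k.+1) - Wv (Th k)) 0.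
Proof. by apply: (dcv (C := 1)) => k; have [_ [_ [h _]]] := dec_parts k. Qed.
Lemma dOmcv : mxcv (fun k => Om (Th k.+1) - Om (Th k)) 0.
Proof. by apply: (dcv (C := 2 / lam2 P)) => k; have [_ [_ [_ [h _]]]] := dec_parts k. Qed.
Lemma dE1cv : mxcv (fun k => E1 (Th k.+1) - E1 (Th k)) 0.
Proof. by apply: (dcv (C := (kap1 P)^-1)) => k; have [_ [_ [_ [_ [h _]]]]] := dec_parts k. Qed.
Lemma dE2cv : mxcv (fun k => E2 (Th k.+1) - E2 (Th k)) 0.
Proof. by apply: (dcv (C := (kap2 P)^-1)) => k; have [_ [_ [_ [_ [_ h]]]]] := dec_parts k. Qed.

Lemma dZ1cv : mxcv (fun k => Z1 (Th k.+1) - Z1 (Th k)) 0.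
Proof.
apply: mxcv_unshift.
have e : (fun k => Z1 (Th k.+2) - Z1 (Th k.+1)) = (fun k => rho1 *: (E1 (Th k.+2) - E1 (Th k.+1))).
  apply/funext => k; have [[z1 _] _ _] := step_any k.+1; have [[z0 _] _ _] := step_any k.
  by rewrite z1 z0 scalerBr.
rewrite e -(scaler0 _ rho1); apply: mxcvZ.
by have := dE1cv; move/mxcv_sub => /(_ S) h; apply: h.
Qed.

Lemma dZ2cv : mxcv (fun k => Z2 (Th k.+1) - Z2 (Th k)) 0.
Proof.
apply: mxcv_unshift.
have e : (fun k => Z2 (Th k.+2) - Z2 (Th k.+1)) = (fun k => rho2 *: (E2 (Th k.+2) - E2 (Th k.+1))).
  apply/funext => k; have [[_ z1] _ _] := step_any k.+1; have [[_ z0] _ _] := step_any k.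
  by rewrite z1 z0 scalerBr.
rewrite e -(scaler0 _ rho2); apply: mxcvZ.
by have := dE2cv; move/mxcv_sub => /(_ S) h; apply: h.
Qed.

Lemma limit_inS (phi : nat -> nat) (Rad : R) (Ts : st) :
  (forall k, (phi k < phi k.+1)%N) -> stcv (fun k => Th (phi k)) Ts ->
  Num.sqrt (Ball X H Y P (Th 0)) < Rad -> in_S X H Y P Rad Ts.
Proof.
move=> hphi hcv hRad.
have mu0 := mu_gt0 Ppos; have l10 := lam1_gt0 Ppos.
have [cO [cU [cQ [cW [cE1 [cE2 [cZ1 cZ2]]]]]]] := hcv.
have sh a b (F : st -> 'M[R]_(a, b)) : mxcv (fun k => F (Th (phi k))) (F Ts) ->
    mxcv (fun k => F (Th k.+1) - F (Th k)) 0 -> mxcv (fun k => F (Th (phi k).+1)) (F Ts).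
  move=> h1 h2; apply: mxcv_shift h1 _; exact: (mxcv_sub h2 hphi).
have cOB := sh _ _ (@Om _ _ _ _ _ _) cO dOmcv.
have cUB := sh _ _ (@Uv _ _ _ _ _ _) cU dUcv.
have cQB := sh _ _ (@Qv _ _ _ _ _ _) cQ dQcv.
have cWB := sh _ _ (@Wv _ _ _ _ _ _) cW dWcv.
have cE1B := sh _ _ (@E1 _ _ _ _ _ _) cE1 dE1cv.
have cE2B := sh _ _ (@E2 _ _ _ _ _ _) cE2 dE2cv.
have cZ1B := sh _ _ (@Z1 _ _ _ _ _ _) cZ1 dZ1cv.
have cZ2B := sh _ _ (@Z2 _ _ _ _ _ _) cZ2 dZ2cv.
have hB : stcv (fun k => Th (phi k).+1) Ts by do !split.
have hT1 : stcv (fun k => with_U (Th (phi k)) (Uv (Th (phi k).+1))) Ts by do !split.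
have hT2 : stcv (fun k => with_Q (with_U (Th (phi k)) (Uv (Th (phi k).+1))) (Qv (Th (phi k).+1))) Ts by do !split.
have gOm : GOm X P Ts = 0.
  apply: (mxcv_uniq (GOm_cv hB)).
  have -> : (fun k => GOm X P (Th (phi k).+1)) = (fun _ => 0).
    by apply/funext => k; have [_ _ [h _ _ _]] := step_any (phi k).
  exact: mxcvC.
have gQ : GQ H Y P Ts = 0.
  apply: (mxcv_uniq (GQ_cv hT1)).
  have -> : (fun k => GQ H Y P (with_U (Th (phi k)) (Uv (Th (phi k).+1))))
     = (fun k => - ((mu * etaQ) *: (Qv (Th (phi k).+1) - Qv (Th (phi k))))).
    by apply/funext => k; have [_ _ [_ h _ _]] := step_any (phi k).
  rewrite -oppr0 -(scaler0 _ (mu * etaQ)); apply: mxcvN; apply: mxcvZ; exact: (mxcv_sub dQcv hphi).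
have gW : GW Y P Ts = 0.
  apply: (mxcv_uniq (GW_cv hT2)).
  have -> : (fun k => GW Y P (with_Q (with_U (Th (phi k)) (Uv (Th (phi k).+1))) (Qv (Th (phi k).+1))))
     = (fun k => - ((mu * etaW) *: (Wv (Th (phi k).+1) - Wv (Th (phi k))))).
    by apply/funext => k; have [_ _ [_ _ h _]] := step_any (phi k).
  rewrite -oppr0 -(scaler0 _ (mu * etaW)); apply: mxcvN; apply: mxcvZ; exact: (mxcv_sub dWcv hphi).
have gr1 : r1 H Ts = 0.
  apply: (mxcv_uniq (r1_cv hB)).
  have -> : (fun k => r1 H (Th (phi k).+1)) = (fun k => mu^-1 *: (Z1 (Th (phi k).+1) - Z1 (Th (phi k)))).
    apply/funext => k; have [_ [h _] _] := step_any (phi k).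
    by rewrite h scalerA mulVf ?gt_eqF // scale1r.
  rewrite -(scaler0 _ mu^-1); apply: mxcvZ; exact: (mxcv_sub dZ1cv hphi).
have gr2 : r2 Y Ts = 0.
  apply: (mxcv_uniq (r2_cv hB)).
  have -> : (fun k => r2 Y (Th (phi k).+1)) = (fun k => mu^-1 *: (Z2 (Th (phi k).+1) - Z2 (Th (phi k)))).
    apply/funext => k; have [_ [_ h] _] := step_any (phi k).
    by rewrite h scalerA mulVf ?gt_eqF // scale1r.
  rewrite -(scaler0 _ mu^-1); apply: mxcvZ; exact: (mxcv_sub dZ2cv hphi).
have zE1 : Z1 Ts = rho1 *: E1 Ts.
  apply: (mxcv_uniq cZ1B).
  have -> : (fun k => Z1 (Th (phi k).+1)) = (fun k => rho1 *: E1 (Th (phi k).+1)).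
    by apply/funext => k; have [[h _] _ _] := step_any (phi k).
  exact: mxcvZ.
have zE2 : Z2 Ts = rho2 *: E2 Ts.
  apply: (mxcv_uniq cZ2B).
  have -> : (fun k => Z2 (Th (phi k).+1)) = (fun k => rho2 *: E2 (Th (phi k).+1)).
    by apply/funext => k; have [[_ h] _ _] := step_any (phi k).
  exact: mxcvZ.
have gE1 : GE1 H P Ts = 0 by rewrite /GE1 gr1 scaler0 add0r zE1 subrr.
have gE2 : GE2 Y P Ts = 0 by rewrite /GE2 gr2 scaler0 add0r zE2 subrr.
set G := GU X H Y P Ts.
set Ssq := fun k => - (lam1 P)^-1 *: (GU X H Y P (Th (phi k)) + (mu * etaU) *: (Uv (Th (phi k).+1) - Uv (Th (phi k)))).
have hS : forall k, l1sub (Uv (Th (phi k).+1)) (Ssq k).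
  move=> k; have [_ _ [_ _ _ [S [h1 h2]]]] := step_any (phi k).
  have -> : Ssq k = S by rewrite /Ssq h2 scalerN scaleNr opprK scalerA mulVf ?gt_eqF // scale1r.
  exact: h1.
have cS : mxcv Ssq (- (lam1 P)^-1 *: G).
  apply: mxcvZ; rewrite -[G]addr0; apply: mxcvD; first exact: GU_cv.
  rewrite -(scaler0 _ (mu * etaU)); apply: mxcvZ; exact: (mxcv_sub dUcv hphi).
have hSl : l1sub (Uv Ts) (- (lam1 P)^-1 *: G).
  move=> i j; split.
    apply: (cv_le (u := fun k => `|Ssq k i j|)); first exact: cv_norm (cS i j).
    by move=> k; exact: (hS k i j).1.
  apply: (cv_uniq (u := fun k => Ssq k i j * Uv (Th (phi k).+1) i j)); first exact: cvM (cS i j) (cUB i j).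
  have -> : (fun k => Ssq k i j * Uv (Th (phi k).+1) i j) = (fun k => `|Uv (Th (phi k).+1) i j|).
    by apply/funext => k; exact: (hS k i j).2.
  exact: cv_norm (cUB i j).
have hsq a b (F : st -> 'M[R]_(a, b)) : mxcv (fun k => F (Th (phi k))) (F Ts) ->
    (forall k, sqn (F (Th k)) <= Ball X H Y P (Th 0)) -> fnorm (F Ts) < Rad.
  move=> h hb; apply: le_lt_trans hRad; rewrite /fnorm -/(sqn _) ler_wsqrtr //.
  by apply: cv_le (sqn_cv h) _ => k; exact: hb.
split.
  apply: stnorm_lt.
  - by apply: hsq cO _ => k; have [h _] := bound_all k.
  - by apply: hsq cU _ => k; have [_ [h _]] := bound_all k.
  - by apply: hsq cQ _ => k; have [_ [_ [h _]]] := bound_all k.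
  - by apply: hsq cW _ => k; have [_ [_ [_ [h _]]]] := bound_all k.
  - by apply: hsq cE1 _ => k; have [_ [_ [_ [_ [h _]]]]] := bound_all k.
  - by apply: hsq cE2 _ => k; have [_ [_ [_ [_ [_ [h _]]]]]] := bound_all k.
  - by apply: hsq cZ1 _ => k; have [_ [_ [_ [_ [_ [_ [h _]]]]]]] := bound_all k.
  - by apply: hsq cZ2 _ => k; have [_ [_ [_ [_ [_ [_ [_ h]]]]]]] := bound_all k.
split.
  exists G, (- (lam1 P)^-1 *: G); split; first exact: QE_grad (QE_LsU X H Y P Ts).
  split; first exact: l1sub_subgrad hSl.
  by rewrite scalerA mulrN mulfV ?gt_eqF // scaleN1r.
split; first by have := QE_grad (QE_LsOm X H Y P Ts); rewrite gOm.
split; first by have := QE_grad (QE_LsQ X H Y P Ts); rewrite gQ.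
split; first by have := QE_grad (QE_LsW X H Y P Ts); rewrite gW.
split; first by have := QE_grad (QE_LsE1 X H Y P Ts); rewrite gE1.
split; first by have := QE_grad (QE_LsE2 X H Y P Ts); rewrite gE2.
split; first by have := QE_grad (QE_LsZ1 X H Y P Ts); rewrite gr1.
split; first by have := QE_grad (QE_LsZ2 X H Y P Ts); rewrite gr2.
split.
  by move/eqP: gr1; rewrite /r1 subr_eq0 => /eqP h; rewrite -h addrC subrK.
by move/eqP: gr2; rewrite /r2 subr_eq0 => /eqP h; rewrite -h addrC subrK.
Qed.

End Main2.

Section BW.
Variable R : realType.
Variables m n r s c : nat.
Local Notation st := (state R m n r s c).

Lemma st_bw (T_ : nat -> st) (C : R) : (forall k, stnorm (T_ k) <= C) ->
  exists F : nat -> nat, (forall k, (F k < F k.+1)%N) /\ exists Ts, stcv (fun k => T_ (F k)) Ts.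
Proof.
move=> hC.
have hb : forall k, fnorm (Om (T_ k)) <= C /\ fnorm (Uv (T_ k)) <= C /\ fnorm (Qv (T_ k)) <= C /\
   fnorm (Wv (T_ k)) <= C /\ fnorm (E1 (T_ k)) <= C /\ fnorm (E2 (T_ k)) <= C /\
   fnorm (Z1 (T_ k)) <= C /\ fnorm (Z2 (T_ k)) <= C.
  move=> k; have := max_ge8 (fnorm (Om (T_ k))) (fnorm (Uv (T_ k))) (fnorm (Qv (T_ k))) (fnorm (Wv (T_ k)))
     (fnorm (E1 (T_ k))) (fnorm (E2 (T_ k))) (fnorm (Z1 (T_ k))) (fnorm (Z2 (T_ k))).
  move=> /= [a1 [a2 [a3 [a4 [a5 [a6 [a7 a8]]]]]]]; have h := hC k; rewrite /stnorm in h.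
  by do !split; apply: le_trans h.
have en a b (F : st -> 'M[R]_(a, b)) (g : nat -> nat) : (forall k, fnorm (F (T_ k)) <= C) ->
    forall k i j, `|F (T_ (g k)) i j| <= C.
  by move=> h k i j; apply: le_trans (entry_le_fnorm _ i j) (h _).
have [f1 [h1 [A1 c1]]] := mx_bw (en _ _ (@Om _ _ _ _ _ _) id (fun k => (hb k).1)).
have [f2 [h2 [A2 c2]]] := mx_bw (en _ _ (@Uv _ _ _ _ _ _) f1 (fun k => (hb k).2.1)).
set g2 := fun k => f1 (f2 k).
have [f3 [h3 [A3 c3]]] := mx_bw (en _ _ (@Qv _ _ _ _ _ _) g2 (fun k => (hb k).2.2.1)).
set g3 := fun k => g2 (f3 k).
have [f4 [h4 [A4 c4]]] := mx_bw (en _ _ (@Wv _ _ _ _ _ _) g3 (fun k => (hb k).2.2.2.1)).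
set g4 := fun k => g3 (f4 k).
have [f5 [h5 [A5 c5]]] := mx_bw (en _ _ (@E1 _ _ _ _ _ _) g4 (fun k => (hb k).2.2.2.2.1)).
set g5 := fun k => g4 (f5 k).
have [f6 [h6 [A6 c6]]] := mx_bw (en _ _ (@E2 _ _ _ _ _ _) g5 (fun k => (hb k).2.2.2.2.2.1)).
set g6 := fun k => g5 (f6 k).
have [f7 [h7 [A7 c7]]] := mx_bw (en _ _ (@Z1 _ _ _ _ _ _) g6 (fun k => (hb k).2.2.2.2.2.2.1)).
set g7 := fun k => g6 (f7 k).
have [f8 [h8 [A8 c8]]] := mx_bw (en _ _ (@Z2 _ _ _ _ _ _) g7 (fun k => (hb k).2.2.2.2.2.2.2)).
set g8 := fun k => g7 (f8 k).
have s78 := strict_comp h7 h8.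
have s68 := strict_comp (g := fun k => f7 (f8 k)) h6 s78.
have s58 := strict_comp (g := fun k => f6 (f7 (f8 k))) h5 s68.
have s48 := strict_comp (g := fun k => f5 (f6 (f7 (f8 k)))) h4 s58.
have s38 := strict_comp (g := fun k => f4 (f5 (f6 (f7 (f8 k))))) h3 s48.
have s28 := strict_comp (g := fun k => f3 (f4 (f5 (f6 (f7 (f8 k)))))) h2 s38.
have s18 := strict_comp (g := fun k => f2 (f3 (f4 (f5 (f6 (f7 (f8 k))))))) h1 s28.
exists g8; split; first exact: s18.
exists (State A1 A2 A3 A4 A5 A6 A7 A8).
split; first exact: (mxcv_sub (f := fun k => f2 (f3 (f4 (f5 (f6 (f7 (f8 k))))))) c1 s28).
split; first exact: (mxcv_sub (f := fun k => f3 (f4 (f5 (f6 (f7 (f8 k)))))) c2 s38).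
split; first exact: (mxcv_sub (f := fun k => f4 (f5 (f6 (f7 (f8 k))))) c3 s48).
split; first exact: (mxcv_sub (f := fun k => f5 (f6 (f7 (f8 k)))) c4 s58).
split; first exact: (mxcv_sub (f := fun k => f6 (f7 (f8 k))) c5 s68).
split; first exact: (mxcv_sub (f := fun k => f7 (f8 k)) c6 s78).
split; first exact: (mxcv_sub c7 h8).
exact: c8.
Qed.

End BW.

End Aux.
Import Aux.

Import numFieldNormedType.Exports.
Unset Implicit Arguments.

Theorem corollary1 (R : realType) (m n r s c : nat)
  (X : 'M[R]_(m, n)) (H : 'M[R]_(s, n)) (Y : 'M[R]_(c, n)) (P : adm_params R) :
  params_pos P ->
  Num.sqrt 2 * Num.max (rho1 P) (rho2 P) <= mu P ->
  forall Theta0 : state R m n r s c,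
  exists etaU0 etaQ0 etaW0 Rad : R,
    [/\ 0 < etaU0, 0 < etaQ0, 0 < etaW0, 0 < Rad &
    forall etaU etaQ etaW : R,
      etaU0 < etaU -> etaQ0 < etaQ -> etaW0 < etaW ->
      forall Theta : nat -> state R m n r s c,
        Theta 0%N = Theta0 ->
        (forall k : nat, adm_step X H Y P etaU etaQ etaW (Theta k) (Theta k.+1)) ->
        [/\ (* (1) bounded iterates *)
            (forall k : nat, stnorm (Theta k) < Rad),
            (* (2) limits of convergent subsequences lie in S *)
            (forall (phi : nat -> nat) (Thstar : state R m n r s c),
               (forall k : nat, (phi k < phi k.+1)%N) ->
               (forall eps : R, 0 < eps -> exists K : nat, forall k : nat,
                  (K <= k)%N -> stdist (Theta (phi k)) Thstar < eps) ->
               in_S X H Y P Rad Thstar) &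
            (* (3) dist(Theta_k, S) -> 0 *)
            (forall eps : R, 0 < eps -> exists K : nat, forall k : nat,
               (K <= k)%N -> exists T' : state R m n r s c,
                 in_S X H Y P Rad T' /\ stdist T' (Theta k) < eps)]].
Proof.
move=> Ppos hmu Th0.
have mu0 := mu_gt0 Ppos; have r10 := rho1_gt0 Ppos; have r20 := rho2_gt0 Ppos.
have s2 : 1 < Num.sqrt (2 : R) by rewrite -{1}sqrtr1 ltr_sqrt // ltr1n.
have hr1 : rho1 P < mu P.
  have : rho1 P <= Num.max (rho1 P) (rho2 P) by rewrite le_max lexx.
  have : Num.sqrt 2 * rho1 P <= Num.sqrt 2 * Num.max (rho1 P) (rho2 P).
    by apply: ler_wpM2l; rewrite ?sqrtr_ge0 // le_max lexx.
  have : rho1 P < Num.sqrt 2 * rho1 P by rewrite ltr_pMl.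
  lra.
have hr2 : rho2 P < mu P.
  have : Num.sqrt 2 * rho2 P <= Num.sqrt 2 * Num.max (rho1 P) (rho2 P).
    by apply: ler_wpM2l; rewrite ?sqrtr_ge0 // le_max lexx orbT.
  have : rho2 P < Num.sqrt 2 * rho2 P by rewrite ltr_pMl.
  lra.
set K := Num.max (Kc P (Bb0 X H Y P Th0)) (Kc P (Bb1 X H Y P Th0)).
set eta0 := (`|K| + 1) / mu P.
set Rad := Num.sqrt (Ball X H Y P Th0) + 1.
have eta00 : 0 < eta0 by rewrite /eta0 divr_gt0 // ltr_pwDr // normr_ge0.
have Rad0 : 0 < Rad by rewrite /Rad ltr_pwDr // sqrtr_ge0.
exists eta0, eta0, eta0, Rad; split => //.
move=> etaU etaQ etaW hU hQ hW Th h0 hstep.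
subst Th0.
have hK eta : eta0 < eta -> Kc P (Bb0 X H Y P (Th 0)) + 1 <= mu P * eta /\ Kc P (Bb1 X H Y P (Th 0)) + 1 <= mu P * eta.
  move=> he.
  have h1 : mu P * eta0 = `|K| + 1 by rewrite /eta0 mulrC -mulrA mulVf ?gt_eqF // mulr1.
  have h2 : mu P * eta0 < mu P * eta by rewrite ltr_pM2l.
  have k1 : Kc P (Bb0 X H Y P (Th 0)) <= `|K| by apply: le_trans (ler_norm _); rewrite le_max lexx.
  have k2 : Kc P (Bb1 X H Y P (Th 0)) <= `|K| by apply: le_trans (ler_norm _); rewrite le_max lexx orbT.
  split; lra.
have [hKU0 hKU1] := hK _ hU; have [hKQ0 hKQ1] := hK _ hQ; have [hKW0 hKW1] := hK _ hW.
have hRad : Num.sqrt (Ball X H Y P (Th 0)) < Rad by rewrite /Rad ltrDl.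
have hlim := limit_inS Ppos hr1 hr2 hstep hKU0 hKQ0 hKW0 hKU1 hKQ1 hKW1.
have hbd := bound_all Ppos hr1 hr2 hstep hKU0 hKQ0 hKW0 hKU1 hKQ1 hKW1.
have fn a b (A : 'M[R]_(a, b)) : sqn A <= Ball X H Y P (Th 0) -> fnorm A < Rad.
  by move=> h; apply: le_lt_trans hRad; rewrite /fnorm -/(sqn _) ler_wsqrtr.
have hst : forall k, stnorm (Th k) < Rad.
  move=> k; have [b1 [b2 [b3 [b4 [b5 [b6 [b7 b8]]]]]]] := hbd k.
  by apply: stnorm_lt; apply: fn.
split => //.
- move=> phi Ts hphi hcv; apply: hlim hphi _ hRad.
  exact: stcv_of_stdist hcv.
- move=> e e0.
  case: (boolp.pselect (exists K0 : nat, forall k : nat, (K0 <= k)%N -> exists T' : state R m n r s c,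
                 in_S X H Y P Rad T' /\ stdist T' (Th k) < e)) => // hn.
  exfalso.
  have bad : forall K0 : nat, exists k, (K0 <= k)%N /\ forall T', in_S X H Y P Rad T' -> ~ (stdist T' (Th k) < e).
    move=> K0; apply: boolp.contrapT => hK0; apply: hn; exists K0 => k kK.
    apply: boolp.contrapT => hk; apply: hK0; exists k; split => // T' hT' hlt; apply: hk; exists T'; split => //.
  pose g := fun K0 => projT1 (boolp.cid (bad K0)).
  have hg K0 : (K0 <= g K0)%N /\ forall T', in_S X H Y P Rad T' -> ~ (stdist T' (Th (g K0)) < e).
    exact: projT2 (boolp.cid (bad K0)).
  pose phi := fix phi j := if j is j'.+1 then g (phi j').+1 else g 0%N.
  have hphi : forall k, (phi k < phi k.+1)%N by move=> k; exact: (hg (phi k).+1).1.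
  have hbadphi : forall k T', in_S X H Y P Rad T' -> ~ (stdist T' (Th (phi k)) < e).
    by case => [|k]; [exact: (hg 0%N).2 | exact: (hg (phi k).+1).2].
  have [F [hF [Ts hTs]]] := st_bw (T_ := fun k => Th (phi k)) (C := Rad) (fun k => ltW (hst (phi k))).
  have hcomp := strict_comp hphi hF.
  have hin := hlim _ _ _ hcomp hTs hRad.
  have [K1 hK1] := stdist_of_stcv hTs e0.
  exact: (hbadphi (F K1) Ts hin (hK1 K1 (leqnn _))).
Qed.
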